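(* Let $g\ge1$. Put $u_1=0$, and let $u_2,\dots,u_{2g+1}$ be pairwise distinct nonzero complex numbers varying in a small open set. Consider the hyperelliptic curve $v^2=u\prod_{i=2}^{2g+1}(u-u_i)$. Let $\{\gamma_k\}_{k=1}^{2g}$ be a basis of its first homology, represented by cycles avoiding the branch points and infinity and transported continuously as the $u_j$ vary. Let $\gamma=\sum_{k=1}^{2g}c_k\gamma_k$ with constants $c_k\in\mathbb{C}$. Define $$a_1=-\oint_\gamma\frac{du}{v},\qquad a_i=\oint_\gamma\frac{du}{v}+u_i\oint_\gamma\frac{du}{(u-u_i)v}\quad(2\le i\le 2g+1).$$ Set $\alpha_1=1/4$, $\alpha_i=-1/4$ for $2\le i\le 2g+1$, and $\alpha_\infty=(2g-1)/4$. Then for all $i\in\{1,\dots,2g+1\}$ and $j\in\{2,\dots,2g+1\}$ with $i\neq j$, $$\frac{\partial a_i}{\partial u_j}=\frac{2(\alpha_j a_i-\alpha_i a_j)}{u_j-u_i},$$ and moreover $\sum_{i=1}^{2g+1}a_i=0$. Explicitly, these relations read $$\frac{\partial a_1}{\partial u_j}=-\frac{a_1+a_j}{2u_j},\qquad \frac{\partial a_i}{\partial u_j}=\frac{a_j-a_i}{2(u_j-u_i)}\quad (i,j\ge2,\ i\ne j).$$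
   Context: These equations are the upper triangular reduction of the rank two Schlesinger system in which $u_1=0$ is fixed. The residue matrices are $A^{(i)}=\begin{pmatrix}\alpha_i & a_i\\ 0&-\alpha_i\end{pmatrix}$, and $A^{(\infty)}=\mathrm{diag}(\alpha_\infty,-\alpha_\infty)$. *)

(* Defs.v *)
From Stdlib Require Import Reals List Lra.
From Coquelicot Require Import Coquelicot.
Open Scope R_scope.

(* Parameters: p : nat -> C ; only the coordinates p 2, ..., p (2g+1) are used
   (these are u_2,...,u_{2g+1}); u_1 = 0 is built in. *)
Definition idx (g : nat) : list nat := seq 2 (2 * g).

Definition ub (p : nat -> C) (i : nat) : C := if Nat.eqb i 1 then 0%C else p i.

Definition hyp_poly (g : nat) (p : nat -> C) (z : C) : C :=
  (z * fold_right Cmult 1%C (map (fun k => (z - p k)%C) (idx g)))%C.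

Definition pdist (g : nat) (p q : nat -> C) : R :=
  fold_right Rmax 0 (map (fun k => Cmod (p k - q k)%C) (idx g)).

Definition par_open (g : nat) (U : (nat -> C) -> Prop) : Prop :=
  forall p, U p -> exists eps, 0 < eps /\ forall q, pdist g p q < eps -> U q.

Definition admissible (g : nat) (p : nat -> C) : Prop :=
  (forall k, (2 <= k <= 2 * g + 1)%nat -> p k <> 0%C) /\
  (forall k l, (2 <= k <= 2 * g + 1)%nat -> (2 <= l <= 2 * g + 1)%nat ->
      k <> l -> p k <> p l).

(* A cycle on the curve over the parameter set U:
   gam : a C^1 closed loop in the u-plane (parametrised by [0,1], with derivative dgam)
   avoiding all branch points u_1=0,...,u_{2g+1} for every parameter in U, and
   w p t : a choice of v over gam t, i.e. w p t ^2 = hyp_poly g p (gam t), closing up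
   (w p 0 = w p 1) and depending continuously on (p,t) (transport of the cycle). *)
Definition lifted_cycle (g : nat) (U : (nat -> C) -> Prop)
    (gam dgam : R -> C) (w : (nat -> C) -> R -> C) : Prop :=
  (forall t, @is_derive R_AbsRing C_R_NormedModule gam t (dgam t)) /\
  (forall t, 0 <= t <= 1 -> forall eps, 0 < eps -> exists delta, 0 < delta /\
      forall s, 0 <= s <= 1 -> Rabs (s - t) < delta -> Cmod (dgam s - dgam t)%C < eps) /\
  gam 0 = gam 1 /\
  (forall p t, U p -> 0 <= t <= 1 ->
      forall i, (1 <= i <= 2 * g + 1)%nat -> gam t <> ub p i) /\
  (forall p t, U p -> 0 <= t <= 1 -> (w p t * w p t)%C = hyp_poly g p (gam t)) /\
  (forall p, U p -> w p 0 = w p 1) /\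
  (forall p t, U p -> 0 <= t <= 1 -> forall eps, 0 < eps -> exists delta, 0 < delta /\
      forall q s, U q -> 0 <= s <= 1 -> pdist g p q < delta -> Rabs (s - t) < delta ->
        Cmod (w q s - w p t)%C < eps).

Definition cyc_int (gam dgam : R -> C) (w : (nat -> C) -> R -> C)
    (F : C -> C) (p : nat -> C) : C :=
  @RInt C_R_CompleteNormedModule
    (fun t => (F (gam t) * dgam t / w p t)%C) 0 1.

Definition per (g : nat) (c : nat -> C) (gam dgam : nat -> R -> C)
    (w : nat -> (nat -> C) -> R -> C) (F : C -> C) (p : nat -> C) : C :=
  fold_right Cplus 0%C
    (map (fun k => (c k * cyc_int (gam k) (dgam k) (w k) F p)%C) (seq 0 (2 * g))).

Definition acoef (g : nat) (c : nat -> C) (gam dgam : nat -> R -> C)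
    (w : nat -> (nat -> C) -> R -> C) (i : nat) (p : nat -> C) : C :=
  if Nat.eqb i 1 then (- per g c gam dgam w (fun _ => 1%C) p)%C
  else (per g c gam dgam w (fun _ => 1%C) p
        + p i * per g c gam dgam w (fun z => / (z - p i))%C p)%C.

Definition alpha (i : nat) : C := if Nat.eqb i 1 then RtoC (1/4) else RtoC (-1/4).
Definition alpha_inf (g : nat) : C := RtoC ((2 * INR g - 1) / 4).

Definition shift (p : nat -> C) (j : nat) (h : C) : nat -> C :=
  fun k => if Nat.eqb k j then (p k + h)%C else p k.

(* Main.v *)
Require Import Defs.
From Stdlib Require Import Reals List.
From Coquelicot Require Import Coquelicot.
Open Scope R_scope.
From Stdlib Require Import Lra Lia ClassicalEpsilon Classical FunctionalExtensionality.


Lemma normCR (z : C) : @norm _ C_R_NormedModule z = Cmod z.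
Proof.
  destruct z as [x y]. unfold norm; simpl. unfold prod_norm, Cmod; simpl.
  f_equal. unfold norm; simpl. unfold abs; simpl.
  rewrite <- !Rsqr_pow2 || idtac. 
  replace (Rabs x * (Rabs x * 1)) with (Rabs x * Rabs x) by ring.
  replace (Rabs y * (Rabs y * 1)) with (Rabs y * Rabs y) by ring.
  rewrite <- !Rabs_mult. rewrite !Rabs_right; try (apply Rle_ge; apply Rle_0_sqr). ring.
Qed.

Lemma normC (z : C) : @norm _ C_NormedModule z = Cmod z.
Proof. reflexivity. Qed.

Lemma scalCR (r : R) (z : C) : @scal _ C_R_NormedModule r z = Cmult (RtoC r) z.
Proof. destruct z as [x y]. unfold scal; simpl. unfold prod_scal, Cmult, RtoC; simpl.
  unfold scal; simpl. unfold mult; simpl. f_equal; ring. Qed.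

Lemma Cmod_re (z : C) : Rabs (fst z) <= Cmod z.
Proof. apply re_le_Cmod. Qed.
Lemma Cmod_im (z : C) : Rabs (snd z) <= Cmod z.
Proof. pose proof (Rmax_Cmod z). pose proof (Rmax_r (Rabs (fst z)) (Rabs (snd z))). lra. Qed.

Lemma Cmod_minus_sym (a b : C) : Cmod (a - b) = Cmod (b - a).
Proof. replace (a - b)%C with (- (b - a))%C by ring. apply Cmod_opp. Qed.

Lemma Cmod_rev (a b : C) : Cmod a - Cmod b <= Cmod (a - b).
Proof. pose proof (Cmod_triangle (a - b) b). replace (a - b + b)%C with a in H by ring. lra. Qed.

Lemma Cmod_tri3 (a b c : C) : Cmod (a - c) <= Cmod (a - b) + Cmod (b - c).
Proof. replace (a - c)%C with ((a - b) + (b - c))%C by ring. apply Cmod_triangle. Qed.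

Lemma Cmod_RtoC (r : R) : Cmod (RtoC r) = Rabs r.
Proof. apply Cmod_R. Qed.

Lemma ballCR (z y : C) (e : R) : Cmod (y - z) < e -> @ball C_R_NormedModule z e y.
Proof.
  intros H. destruct z as [a b], y as [c d]. unfold ball; simpl. split; simpl;
  unfold ball; simpl; unfold AbsRing_ball; simpl; unfold abs, minus, plus, opp; simpl.
  - pose proof (Cmod_re ((c,d) - (a,b))%C). simpl in H0. lra.
  - pose proof (Cmod_im ((c,d) - (a,b))%C). simpl in H0. lra.
Qed.

Lemma Cmod2 : Cmod 2%C = 2.
Proof. rewrite Cmod_R. apply Rabs_pos_eq. lra. Qed.


Definition cont01 (f : R -> C) : Prop :=
  forall t, 0 <= t <= 1 -> forall eps, 0 < eps -> exists d, 0 < d /\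
    forall s, 0 <= s <= 1 -> Rabs (s - t) < d -> Cmod (f s - f t) < eps.

Lemma cont01_const (c : C) : cont01 (fun _ => c).
Proof. intros t Ht eps He. exists 1. split; [lra|]. intros s Hs _.
  replace (c - c)%C with (RtoC 0) by ring. rewrite Cmod_0. lra. Qed.

Lemma cont01_plus f g : cont01 f -> cont01 g -> cont01 (fun t => f t + g t)%C.
Proof.
  intros Hf Hg t Ht eps He.
  destruct (Hf t Ht (eps/2)) as [d1 [Hd1 H1]]; [lra|].
  destruct (Hg t Ht (eps/2)) as [d2 [Hd2 H2]]; [lra|].
  exists (Rmin d1 d2). split; [apply Rmin_pos; lra|]. intros s Hs Hst.
  replace (f s + g s - (f t + g t))%C with ((f s - f t) + (g s - g t))%C by ring.
  eapply Rle_lt_trans; [apply Cmod_triangle|].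
  pose proof (Rmin_l d1 d2); pose proof (Rmin_r d1 d2).
  specialize (H1 s Hs ltac:(lra)). specialize (H2 s Hs ltac:(lra)). lra.
Qed.

Lemma cont01_mult f g : cont01 f -> cont01 g -> cont01 (fun t => f t * g t)%C.
Proof.
  intros Hf Hg t Ht eps He.
  set (A := Cmod (f t)). set (B := Cmod (g t)).
  assert (HA : 0 <= A) by apply Cmod_ge_0. assert (HB : 0 <= B) by apply Cmod_ge_0.
  set (e1 := Rmin 1 (eps / (2 * (B + 1)))).
  set (e2 := eps / (2 * (A + 1))).
  assert (He1 : 0 < e1). { apply Rmin_pos; [lra|]. apply Rdiv_lt_0_compat; lra. }
  assert (He2 : 0 < e2). { apply Rdiv_lt_0_compat; lra. }
  destruct (Hf t Ht e1 He1) as [d1 [Hd1 H1]].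
  destruct (Hg t Ht e2 He2) as [d2 [Hd2 H2]].
  exists (Rmin d1 d2). split; [apply Rmin_pos; lra|]. intros s Hs Hst.
  pose proof (Rmin_l d1 d2); pose proof (Rmin_r d1 d2).
  specialize (H1 s Hs ltac:(lra)). specialize (H2 s Hs ltac:(lra)).
  replace (f s * g s - f t * g t)%C with (f s * (g s - g t) + (f s - f t) * g t)%C by ring.
  eapply Rle_lt_trans; [apply Cmod_triangle|]. rewrite !Cmod_mult.
  assert (Hfs : Cmod (f s) <= A + 1).
  { pose proof (Cmod_rev (f s) (f t)) as R1. pose proof (Rmin_l 1 (eps / (2 * (B + 1)))) as R2. fold e1 in R2. fold A in R1. lra. }
  assert (E1 : e1 <= eps / (2 * (B + 1))) by apply Rmin_r.
  assert (P1 : Cmod (f s) * Cmod (g s - g t) <= (A+1) * e2).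
  { apply Rmult_le_compat; try apply Cmod_ge_0; lra. }
  assert (P2 : Cmod (f s - f t) * B <= e1 * (B + 1)).
  { apply Rmult_le_compat; try apply Cmod_ge_0; lra. }
  assert (Q1 : (A + 1) * e2 = eps / 2). { unfold e2. field. lra. }
  assert (Q2 : e1 * (B + 1) <= eps / 2).
  { apply Rle_trans with (eps / (2 * (B + 1)) * (B + 1)).
    apply Rmult_le_compat_r; lra. right. field. lra. }
  assert (Cmod (f s - f t) < e1) by exact H1.
  assert (Cmod (f s - f t) * B < eps / 2 \/ Cmod (f s - f t) * B <= e1 * (B+1)) by (right; exact P2).
  assert (Cmod (f s) * Cmod (g s - g t) < (A + 1) * e2 \/ B = 0 \/ True) by auto.
  assert (P1' : Cmod (f s) * Cmod (g s - g t) <= (A+1) * Cmod (g s - g t)).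
  { apply Rmult_le_compat_r; [apply Cmod_ge_0|lra]. }
  assert (P1'' : (A+1) * Cmod (g s - g t) < (A+1) * e2).
  { apply Rmult_lt_compat_l; lra. }
  fold B. lra.
Qed.

Lemma cont01_inv f : cont01 f -> (forall t, 0 <= t <= 1 -> f t <> 0%C) -> cont01 (fun t => / f t)%C.
Proof.
  intros Hf Hnz t Ht eps He.
  set (A := Cmod (f t)). assert (HA : 0 < A) by (apply Cmod_gt_0; auto).
  set (e := Rmin (A / 2) (eps * A * A / 2)).
  assert (Hee : 0 < e). { apply Rmin_pos. lra. apply Rdiv_lt_0_compat; [|lra]. apply Rmult_lt_0_compat; [apply Rmult_lt_0_compat|]; lra. }
  destruct (Hf t Ht e Hee) as [d [Hd H]]. exists d. split; auto. intros s Hs Hst.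
  specialize (H s Hs Hst).
  pose proof (Rmin_l (A / 2) (eps * A * A / 2)) as E1. pose proof (Rmin_r (A / 2) (eps * A * A / 2)) as E2.
  fold e in E1, E2.
  assert (Hfs : A / 2 <= Cmod (f s)). { pose proof (Cmod_rev (f t) (f s)). rewrite Cmod_minus_sym in H0. fold A in H0. lra. }
  assert (Hfs0 : f s <> 0%C). { intro Z. rewrite Z, Cmod_0 in Hfs. lra. }
  replace (/ f s - / f t)%C with ((f t - f s) * / f s * / f t)%C by (field; auto).
  rewrite !Cmod_mult, !Cmod_inv by auto. rewrite Cmod_minus_sym. fold A.
  apply Rle_lt_trans with (Cmod (f s - f t) * / (A/2) * / A).
  { apply Rmult_le_compat_r. left; apply Rinv_0_lt_compat; lra.
    apply Rmult_le_compat_l. apply Cmod_ge_0. apply Rinv_le_contravar; lra. }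
  apply Rlt_le_trans with (e * / (A/2) * / A).
  { apply Rmult_lt_compat_r. apply Rinv_0_lt_compat; lra. apply Rmult_lt_compat_r. apply Rinv_0_lt_compat; lra. lra. }
  apply Rle_trans with ((eps * A * A / 2) * / (A/2) * / A).
  { apply Rmult_le_compat_r. left; apply Rinv_0_lt_compat; lra. apply Rmult_le_compat_r. left; apply Rinv_0_lt_compat; lra. lra. }
  right. field. lra.
Qed.

Lemma cont01_opp f : cont01 f -> cont01 (fun t => - f t)%C.
Proof. intros Hf. assert (cont01 (fun t => (-1) * f t)%C) by (apply cont01_mult; auto using cont01_const).
  intros t Ht eps He. destruct (H t Ht eps He) as [d [Hd H1]]. exists d. split; auto. intros s Hs Hst.
  specialize (H1 s Hs Hst). replace (- f s - - f t)%C with (-1 * f s - -1 * f t)%C by ring. auto. Qed.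

Lemma cont01_minus f g : cont01 f -> cont01 g -> cont01 (fun t => f t - g t)%C.
Proof. intros. apply (cont01_plus f (fun t => - g t)%C); auto. apply cont01_opp; auto. Qed.

Lemma cont01_ext f g : (forall t, 0 <= t <= 1 -> f t = g t) -> cont01 f -> cont01 g.
Proof. intros E Hf t Ht eps He. destruct (Hf t Ht eps He) as [d [Hd H]]. exists d; split; auto.
  intros s Hs Hst. rewrite <- !E; auto. Qed.

Definition clamp (x : R) : R := Rmax 0 (Rmin 1 x).
Lemma clamp_in x : 0 <= clamp x <= 1.
Proof. unfold clamp. split. apply Rmax_l. apply Rmax_lub; [lra| apply Rmin_l]. Qed.
Lemma clamp_id x : 0 <= x <= 1 -> clamp x = x.
Proof. intros. unfold clamp. rewrite Rmin_right by lra. rewrite Rmax_right; lra. Qed.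
Lemma clamp_lip x y : Rabs (clamp x - clamp y) <= Rabs (x - y).
Proof. unfold clamp. unfold Rmax, Rmin. repeat destruct Rle_dec; unfold Rabs; repeat destruct Rcase_abs; lra. Qed.

Lemma cont01_clamp_pt f x : cont01 f -> forall eps, 0 < eps -> exists d, 0 < d /\
  forall s, Rabs (s - x) < d -> Cmod (f (clamp s) - f (clamp x)) < eps.
Proof. intros Hf eps He. destruct (Hf (clamp x) (clamp_in x) eps He) as [d [Hd H]].
  exists d. split; auto. intros s Hs. apply H. apply clamp_in. pose proof (clamp_lip s x). lra. Qed.

Lemma cont01_bound f : cont01 f -> exists B, 0 < B /\ forall t, 0 <= t <= 1 -> Cmod (f t) <= B.
Proof.
  intros Hf.
  destruct (continuity_ab_maj (fun t => Cmod (f (clamp t))) 0 1) as [M [HM _]]; [lra| |].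
  { intros c _. intros eps He. destruct (cont01_clamp_pt f c Hf eps He) as [d [Hd H]].
    exists d. split; auto. intros s [_ Hs]. simpl in *. unfold R_dist in *.
    specialize (H s Hs). pose proof (Cmod_rev (f (clamp s)) (f (clamp c))).
    pose proof (Cmod_rev (f (clamp c)) (f (clamp s))). rewrite Cmod_minus_sym in H1.
    unfold Rabs; destruct Rcase_abs; lra. }
  exists (Cmod (f (clamp M)) + 1). split. pose proof (Cmod_ge_0 (f (clamp M))). lra.
  intros t Ht. specialize (HM t Ht). simpl in HM. rewrite clamp_id in HM by auto. lra.
Qed.

Lemma cont01_lbound f : cont01 f -> (forall t, 0 <= t <= 1 -> f t <> 0%C) ->
  exists m, 0 < m /\ forall t, 0 <= t <= 1 -> m <= Cmod (f t).
Proof.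
  intros Hf Hnz. destruct (cont01_bound _ (cont01_inv f Hf Hnz)) as [B [HB H]].
  exists (/ B). split. apply Rinv_0_lt_compat; auto. intros t Ht. specialize (H t Ht).
  rewrite Cmod_inv in H by auto. pose proof (Cmod_gt_0 (f t)). destruct H0. specialize (H0 (Hnz t Ht)).
  replace (Cmod (f t)) with (/ / Cmod (f t)) by (field; lra).
  apply Rinv_le_contravar; auto. apply Rinv_0_lt_compat; auto.
Qed.

Lemma cont_of_eps (f : R -> C) x : (forall eps, 0 < eps -> exists d, 0 < d /\
  forall s, Rabs (s - x) < d -> Cmod (f s - f x) < eps) -> @continuous R_UniformSpace C_R_NormedModule f x.
Proof.
  intros H. apply filterlim_locally. intros [eps He]. simpl.
  destruct (H eps He) as [d [Hd H1]]. exists (mkposreal d Hd). intros s Hs. apply ballCR.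
  apply H1. exact Hs.
Qed.

Lemma ex_RInt01 f : cont01 f -> @ex_RInt C_R_NormedModule f 0 1.
Proof.
  intros Hf. apply (ex_RInt_ext (fun t => f (clamp t))).
  { intros x Hx. rewrite Rmin_left in Hx by lra. rewrite Rmax_right in Hx by lra. rewrite clamp_id; auto. lra. }
  apply (@ex_RInt_continuous C_R_CompleteNormedModule). intros z _. apply cont_of_eps.
  intros eps He. apply (cont01_clamp_pt f z Hf eps He).
Qed.

Lemma ex_RInt_ab f a b : 0 <= a -> a <= b -> b <= 1 -> cont01 f -> @ex_RInt C_R_NormedModule f a b.
Proof.
  intros. apply (ex_RInt_ext (fun t => f (clamp t))).
  { intros x Hx. rewrite Rmin_left in Hx by lra. rewrite Rmax_right in Hx by lra. rewrite clamp_id; auto. lra. }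
  apply (@ex_RInt_continuous C_R_CompleteNormedModule). intros z _. apply cont_of_eps.
  intros eps He. apply (cont01_clamp_pt f z H2 eps He).
Qed.


Lemma is_RInt_Cmult (f : R -> C) a b (l c : C) :
  @is_RInt C_R_NormedModule f a b l -> @is_RInt C_R_NormedModule (fun t => c * f t)%C a b (c * l)%C.
Proof.
  intros H. destruct c as [c1 c2], l as [l1 l2].
  pose proof (@is_RInt_fct_extend_fst R_NormedModule R_NormedModule f a b (l1,l2) H) as H1.
  pose proof (@is_RInt_fct_extend_snd R_NormedModule R_NormedModule f a b (l1,l2) H) as H2.
  simpl in H1, H2.
  apply (@is_RInt_fct_extend_pair R_NormedModule R_NormedModule (fun t => (c1, c2) * f t)%C a b).
  - simpl. eapply is_RInt_ext; [| apply (is_RInt_minus _ _ _ _ _ _ (is_RInt_scal _ _ _ c1 _ H1) (is_RInt_scal _ _ _ c2 _ H2))].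
    intros x _. unfold minus, plus, opp, scal; simpl. unfold mult; simpl. destruct (f x); simpl. ring.
  - simpl. eapply is_RInt_ext; [| apply (is_RInt_plus _ _ _ _ _ _ (is_RInt_scal _ _ _ c1 _ H2) (is_RInt_scal _ _ _ c2 _ H1))].
    intros x _. unfold minus, plus, opp, scal; simpl. unfold mult; simpl. destruct (f x); simpl. ring.
Qed.

Lemma RInt_Cmult (f : R -> C) a b (c : C) : @ex_RInt C_R_NormedModule f a b ->
  @RInt C_R_CompleteNormedModule (fun t => c * f t)%C a b = (c * @RInt C_R_CompleteNormedModule f a b)%C.
Proof. intros [l H]. apply is_RInt_unique. apply is_RInt_Cmult. rewrite (@is_RInt_unique C_R_CompleteNormedModule _ _ _ _ H). auto. Qed.

Lemma ex_RInt_Cmult (f : R -> C) a b (c : C) : @ex_RInt C_R_NormedModule f a b ->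
  @ex_RInt C_R_NormedModule (fun t => c * f t)%C a b.
Proof. intros [l H]. eexists. apply is_RInt_Cmult; eauto. Qed.

Lemma RInt_Cplus (f g : R -> C) a b : @ex_RInt C_R_NormedModule f a b -> @ex_RInt C_R_NormedModule g a b ->
  @RInt C_R_CompleteNormedModule (fun t => f t + g t)%C a b =
  (@RInt C_R_CompleteNormedModule f a b + @RInt C_R_CompleteNormedModule g a b)%C.
Proof. intros Hf Hg. apply (@RInt_plus C_R_CompleteNormedModule); auto. Qed.

Lemma RInt_Cminus (f g : R -> C) a b : @ex_RInt C_R_NormedModule f a b -> @ex_RInt C_R_NormedModule g a b ->
  @RInt C_R_CompleteNormedModule (fun t => f t - g t)%C a b =
  (@RInt C_R_CompleteNormedModule f a b - @RInt C_R_CompleteNormedModule g a b)%C.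
Proof. intros Hf Hg. apply (@RInt_minus C_R_CompleteNormedModule); auto. Qed.

Lemma RInt_Cbound (f : R -> C) a b B : a <= b -> @ex_RInt C_R_NormedModule f a b ->
  (forall t, a <= t <= b -> Cmod (f t) <= B) -> Cmod (@RInt C_R_CompleteNormedModule f a b) <= B * (b - a).
Proof.
  intros Hab Hf HB. rewrite <- normCR.
  replace (B * (b - a)) with (scal (b - a) B) by (unfold scal; simpl; unfold mult; simpl; ring).
  apply (@norm_RInt_le C_R_NormedModule f (fun _ => B) a b); auto.
  - intros t Ht. rewrite normCR. auto.
  - apply (@RInt_correct C_R_CompleteNormedModule). auto.
  - apply (@is_RInt_const R_NormedModule).
Qed.

Lemma RInt_ext01 (f g : R -> C) a b : a <= b -> (forall t, a <= t <= b -> f t = g t) ->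
  @RInt C_R_CompleteNormedModule f a b = @RInt C_R_CompleteNormedModule g a b.
Proof. intros Hab H. apply RInt_ext. intros x Hx. rewrite Rmin_left in Hx by lra. rewrite Rmax_right in Hx by lra. apply H; lra. Qed.


Definition hd (f : R -> C) (x : R) (l : C) : Prop :=
  forall eps, 0 < eps -> exists d, 0 < d /\ forall s, Rabs (s - x) < d ->
    Cmod (f s - f x - RtoC (s - x) * l) <= eps * Rabs (s - x).

Lemma hd_is_derive f x l : hd f x l -> @is_derive R_AbsRing C_R_NormedModule f x l.
Proof.
  intros H. split. apply is_linear_scal_l.
  intros y Hy. apply (@is_filter_lim_locally_unique R_AbsRing R_NormedModule) in Hy. subst y.
  intros [eps He]. destruct (H eps He) as [d [Hd H1]]. exists (mkposreal d Hd).
  intros y Hy. simpl in *. rewrite normCR, scalCR.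
  unfold ball in Hy; simpl in Hy; unfold AbsRing_ball in Hy. unfold norm; simpl. unfold abs in *; simpl in *.
  unfold minus at 3. unfold minus in Hy. unfold plus, opp in *; simpl in *.
  specialize (H1 y Hy). unfold minus; simpl. unfold plus, opp; simpl. exact H1.
Qed.

Lemma is_derive_hd f x l : @is_derive R_AbsRing C_R_NormedModule f x l -> hd f x l.
Proof.
  intros [_ H] eps He. specialize (H x (fun P HP => HP) (mkposreal eps He)).
  destruct H as [[d Hd] H1]. exists d. split; auto. intros s Hs.
  specialize (H1 s Hs). simpl in H1. rewrite normCR, scalCR in H1. exact H1.
Qed.

Lemma hd_lip f x l : hd f x l -> exists d, 0 < d /\ forall s, Rabs (s - x) < d ->
  Cmod (f s - f x) <= (Cmod l + 1) * Rabs (s - x).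
Proof.
  intros H. destruct (H 1 Rlt_0_1) as [d [Hd H1]]. exists d. split; auto. intros s Hs.
  specialize (H1 s Hs). pose proof (Cmod_triangle (f s - f x - RtoC (s - x) * l) (RtoC (s - x) * l)).
  replace (f s - f x - RtoC (s - x) * l + RtoC (s - x) * l)%C with (f s - f x)%C in H0 by ring.
  rewrite Cmod_mult, Cmod_RtoC in H0. nra.
Qed.

Lemma hd_const c x : hd (fun _ => c) x 0%C.
Proof. intros eps He. exists 1. split; [lra|]. intros s _.
  replace (c - c - RtoC (s - x) * 0)%C with (RtoC 0) by ring. rewrite Cmod_0.
  pose proof (Rabs_pos (s - x)). nra. Qed.

Lemma hd_plus f g x lf lg : hd f x lf -> hd g x lg -> hd (fun t => f t + g t)%C x (lf + lg)%C.
Proof.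
  intros Hf Hg eps He.
  destruct (Hf (eps/2)) as [d1 [Hd1 H1]]; [lra|].
  destruct (Hg (eps/2)) as [d2 [Hd2 H2]]; [lra|].
  exists (Rmin d1 d2). split; [apply Rmin_pos; lra|]. intros s Hs.
  pose proof (Rmin_l d1 d2); pose proof (Rmin_r d1 d2).
  specialize (H1 s ltac:(lra)). specialize (H2 s ltac:(lra)).
  replace (f s + g s - (f x + g x) - RtoC (s - x) * (lf + lg))%C with
    ((f s - f x - RtoC (s - x) * lf) + (g s - g x - RtoC (s - x) * lg))%C by ring.
  eapply Rle_trans; [apply Cmod_triangle|]. lra.
Qed.

Lemma hd_mult f g x lf lg : hd f x lf -> hd g x lg ->
  hd (fun t => f t * g t)%C x (lf * g x + f x * lg)%C.
Proof.
  intros Hf Hg eps He.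
  set (A := Cmod (f x)). set (B := Cmod (g x)).
  assert (HA : 0 <= A) by apply Cmod_ge_0. assert (HB : 0 <= B) by apply Cmod_ge_0.
  destruct (Hf (eps / (3 * (B + 1)))) as [d1 [Hd1 H1]]. { apply Rdiv_lt_0_compat; lra. }
  destruct (Hg (eps / (3 * (A + 1)))) as [d2 [Hd2 H2]]. { apply Rdiv_lt_0_compat; lra. }
  destruct (hd_lip f x lf Hf) as [d3 [Hd3 H3]].
  destruct (hd_lip g x lg Hg) as [d4 [Hd4 H4]].
  set (Lf := Cmod lf + 1). set (Lg := Cmod lg + 1).
  assert (HLf : 1 <= Lf) by (pose proof (Cmod_ge_0 lf); unfold Lf; lra).
  assert (HLg : 1 <= Lg) by (pose proof (Cmod_ge_0 lg); unfold Lg; lra).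
  set (d5 := eps / (3 * Lf * Lg)).
  assert (Hd5 : 0 < d5) by (apply Rdiv_lt_0_compat; nra).
  exists (Rmin (Rmin d1 d2) (Rmin (Rmin d3 d4) d5)).
  split. { repeat apply Rmin_pos; lra. }
  intros s Hs.
  pose proof (Rmin_l (Rmin d1 d2) (Rmin (Rmin d3 d4) d5)) as M1.
  pose proof (Rmin_r (Rmin d1 d2) (Rmin (Rmin d3 d4) d5)) as M2.
  pose proof (Rmin_l d1 d2); pose proof (Rmin_r d1 d2);
  pose proof (Rmin_l (Rmin d3 d4) d5); pose proof (Rmin_r (Rmin d3 d4) d5);
  pose proof (Rmin_l d3 d4); pose proof (Rmin_r d3 d4).
  specialize (H1 s ltac:(lra)). specialize (H2 s ltac:(lra)).
  specialize (H3 s ltac:(lra)). specialize (H4 s ltac:(lra)).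
  fold Lf in H3. fold Lg in H4.
  set (r := Rabs (s - x)). fold r in Hs, H1, H2, H3, H4.
  assert (Hr : 0 <= r) by apply Rabs_pos.
  replace (f s * g s - f x * g x - RtoC (s - x) * (lf * g x + f x * lg))%C with
    ((f s - f x - RtoC (s - x) * lf) * g x + f x * (g s - g x - RtoC (s - x) * lg)
     + (f s - f x) * (g s - g x))%C by ring.
  eapply Rle_trans; [apply Cmod_triangle|].
  eapply Rle_trans; [apply Rplus_le_compat_r; apply Cmod_triangle|].
  rewrite !Cmod_mult. fold A B.
  assert (T1 : Cmod (f s - f x - RtoC (s - x) * lf) * B <= eps / 3 * r).
  { apply Rle_trans with (eps / (3 * (B + 1)) * r * (B + 1)).
    apply Rmult_le_compat; try apply Cmod_ge_0; lra.
    right. field. lra. }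
  assert (T2 : A * Cmod (g s - g x - RtoC (s - x) * lg) <= eps / 3 * r).
  { apply Rle_trans with ((A + 1) * (eps / (3 * (A + 1)) * r)).
    apply Rmult_le_compat; try apply Cmod_ge_0; lra.
    right. field. lra. }
  assert (T3 : Cmod (f s - f x) * Cmod (g s - g x) <= eps / 3 * r).
  { apply Rle_trans with ((Lf * r) * (Lg * r)).
    apply Rmult_le_compat; try apply Cmod_ge_0; auto.
    assert (r <= d5) by lra.
    apply Rle_trans with (Lf * Lg * d5 * r). 
    { replace (Lf * r * (Lg * r)) with (Lf * Lg * r * r) by ring.
      apply Rmult_le_compat_r; auto. apply Rmult_le_compat_l; nra. }
    right. unfold d5. field. nra. }
  lra.
Qed.

Lemma hd_scal (c : C) f x l : hd f x l -> hd (fun t => c * f t)%C x (c * l)%C.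
Proof.
  intros H. pose proof (hd_mult (fun _ => c) f x 0%C l (hd_const c x) H) as H1.
  intros eps He. destruct (H1 eps He) as [d [Hd H2]]. exists d. split; auto. intros s Hs.
  specialize (H2 s Hs). replace (c * f s - c * f x - RtoC (s - x) * (c * l))%C with
   (c * f s - c * f x - RtoC (s - x) * (0 * f x + c * l))%C by ring. auto.
Qed.

Lemma hd_ext f g x l : (exists d, 0 < d /\ forall s, Rabs (s - x) < d -> f s = g s) -> hd f x l -> hd g x l.
Proof.
  intros [d0 [Hd0 E]] H eps He. destruct (H eps He) as [d [Hd H1]].
  exists (Rmin d d0). split; [apply Rmin_pos; lra|]. intros s Hs.
  pose proof (Rmin_l d d0); pose proof (Rmin_r d d0).
  rewrite <- (E s) by lra. rewrite <- (E x) by (rewrite Rminus_diag, Rabs_R0; lra). apply H1. lra.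
Qed.

Lemma hd_inv f x l : hd f x l -> f x <> 0%C -> hd (fun t => / f t)%C x (- l / (f x * f x))%C.
Proof.
  intros H Hnz eps He.
  set (A := Cmod (f x)). assert (HA : 0 < A) by (apply Cmod_gt_0; auto).
  set (L := Cmod l + 1). assert (HL : 1 <= L) by (pose proof (Cmod_ge_0 l); unfold L; lra).
  destruct (hd_lip f x l H) as [d1 [Hd1 H1]]. fold L in H1.
  destruct (H (eps * A * A / 4)) as [d2 [Hd2 H2]].
  { apply Rdiv_lt_0_compat; [|lra]. repeat apply Rmult_lt_0_compat; lra. }
  set (d3 := A / (2 * L)). assert (Hd3 : 0 < d3) by (apply Rdiv_lt_0_compat; lra).
  set (d4 := eps * A * A * A / (4 * L * L)).
  assert (Hd4 : 0 < d4) by (apply Rdiv_lt_0_compat; [repeat apply Rmult_lt_0_compat; lra| nra]).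
  exists (Rmin (Rmin d1 d2) (Rmin d3 d4)). split. { repeat apply Rmin_pos; lra. }
  intros s Hs.
  pose proof (Rmin_l (Rmin d1 d2) (Rmin d3 d4)); pose proof (Rmin_r (Rmin d1 d2) (Rmin d3 d4)).
  pose proof (Rmin_l d1 d2); pose proof (Rmin_r d1 d2); pose proof (Rmin_l d3 d4); pose proof (Rmin_r d3 d4).
  specialize (H1 s ltac:(lra)). specialize (H2 s ltac:(lra)).
  set (r := Rabs (s - x)). fold r in Hs, H1, H2. assert (Hr : 0 <= r) by apply Rabs_pos.
  assert (Hdiff : Cmod (f s - f x) <= A / 2).
  { apply Rle_trans with (L * r); auto. apply Rle_trans with (L * d3). apply Rmult_le_compat_l; lra.
    right. unfold d3. field. lra. }
  assert (Hfs : A / 2 <= Cmod (f s)).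
  { pose proof (Cmod_rev (f x) (f s)) as RR. rewrite Cmod_minus_sym in RR. fold A in RR. lra. }
  assert (Hfs0 : f s <> 0%C). { intro Z. rewrite Z, Cmod_0 in Hfs. lra. }
  replace (/ f s - / f x - RtoC (s - x) * (- l / (f x * f x)))%C with
    (- (f s - f x - RtoC (s - x) * l) * / f s * / f x
     + RtoC (s - x) * l * (f s - f x) * / f s * / (f x * f x))%C by (field; auto).
  eapply Rle_trans; [apply Cmod_triangle|].
  rewrite !Cmod_mult, Cmod_opp, !Cmod_inv, Cmod_mult, Cmod_RtoC by (auto; apply Cmult_neq_0; auto).
  fold A r.
  assert (Ifs : / Cmod (f s) <= 2 / A).
  { replace (2 / A) with (/ (A / 2)) by (field; lra). apply Rinv_le_contravar; lra. }
  assert (T1 : Cmod (f s - f x - RtoC (s - x) * l) * / Cmod (f s) * / A <= eps / 2 * r).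
  { apply Rle_trans with ((eps * A * A / 4 * r) * (2 / A) * / A).
    apply Rmult_le_compat_r. left; apply Rinv_0_lt_compat; lra.
    apply Rmult_le_compat; try apply Cmod_ge_0; auto. left; apply Rinv_0_lt_compat; lra.
    right. field. lra. }
  assert (T2 : r * Cmod l * Cmod (f s - f x) * / Cmod (f s) * / (A * A) <= eps / 2 * r).
  { apply Rle_trans with (r * L * (L * r) * (2 / A) * / (A * A)).
    apply Rmult_le_compat_r. left; apply Rinv_0_lt_compat; nra.
    apply Rmult_le_compat; try (left; apply Rinv_0_lt_compat; lra).
    repeat apply Rmult_le_pos; try apply Cmod_ge_0; lra.
    apply Rmult_le_compat; auto. apply Rmult_le_pos; auto; apply Cmod_ge_0. apply Cmod_ge_0.
    apply Rmult_le_compat_l; auto. unfold L; lra. auto.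
    assert (r <= d4) by lra.
    apply Rle_trans with (d4 * L * L * 2 / (A * A * A) * r).
    { replace (r * L * (L * r) * (2 / A) * / (A * A)) with (r * L * L * 2 / (A * A * A) * r) by (field; lra).
      apply Rmult_le_compat_r; auto. unfold Rdiv. apply Rmult_le_compat_r. left; apply Rinv_0_lt_compat.
      apply Rmult_lt_0_compat; [apply Rmult_lt_0_compat|]; lra.
      apply Rmult_le_compat_r; [lra|]; apply Rmult_le_compat_r; [lra|]; apply Rmult_le_compat_r; lra. }
    right. unfold d4. field. nra. }
  lra.
Qed.


Lemma hd_sqrt (W Q : R -> C) x Q' : hd Q x Q' -> W x <> 0%C ->
  (exists d0, 0 < d0 /\ forall s, Rabs (s - x) < d0 -> (W s * W s)%C = Q s) ->
  (forall eps, 0 < eps -> exists d, 0 < d /\ forall s, Rabs (s - x) < d -> Cmod (W s - W x) < eps) ->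
  hd W x (Q' / (2 * W x))%C.
Proof.
  intros HQ Hnz [d0 [Hd0 HWQ]] HW eps He.
  set (A := Cmod (W x)). assert (HA : 0 < A) by (unfold A; apply Cmod_gt_0; exact Hnz).
  set (L := Cmod Q' + 1). assert (HL : 1 <= L) by (pose proof (Cmod_ge_0 Q'); unfold L; lra).
  destruct (HQ (eps * A / 2)) as [d1 [Hd1 H1]]. { apply Rdiv_lt_0_compat; [apply Rmult_lt_0_compat|]; lra. }
  set (eta := Rmin A (eps * A * A / L)).
  assert (Heta : 0 < eta). { apply Rmin_pos; auto. apply Rdiv_lt_0_compat; [repeat apply Rmult_lt_0_compat|]; lra. }
  destruct (HW eta Heta) as [d2 [Hd2 H2]].
  exists (Rmin (Rmin d0 d1) d2). split. { repeat apply Rmin_pos; lra. }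
  intros s Hs.
  pose proof (Rmin_l (Rmin d0 d1) d2); pose proof (Rmin_r (Rmin d0 d1) d2).
  pose proof (Rmin_l d0 d1); pose proof (Rmin_r d0 d1).
  pose proof (Rmin_l A (eps * A * A / L)) as E1; pose proof (Rmin_r A (eps * A * A / L)) as E2. fold eta in E1, E2.
  specialize (H1 s ltac:(lra)). specialize (H2 s ltac:(lra)).
  assert (Qs : Q s = (W s * W s)%C) by (symmetry; apply HWQ; lra).
  assert (Qx : Q x = (W x * W x)%C) by (symmetry; apply HWQ; rewrite Rminus_diag, Rabs_R0; lra).
  set (r := Rabs (s - x)). fold r in Hs, H1. assert (Hr : 0 <= r) by apply Rabs_pos.
  assert (Hsum : A <= Cmod (W s + W x)).
  { pose proof (Cmod_rev (2 * W x) (W x - W s)) as RR.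
    replace (2 * W x - (W x - W s))%C with (W s + W x)%C in RR by ring.
    rewrite Cmod_mult in RR. rewrite Cmod_minus_sym in RR. fold A in RR.
    rewrite Cmod2 in RR. lra. }
  assert (Hsum0 : (W s + W x)%C <> 0%C). { intro Z. rewrite Z, Cmod_0 in Hsum. lra. }
  replace (W s - W x - RtoC (s - x) * (Q' / (2 * W x)))%C with
    ((Q s - Q x - RtoC (s - x) * Q') / (W s + W x)
     + RtoC (s - x) * Q' * (W x - W s) / ((W s + W x) * (2 * W x)))%C.
  2:{ rewrite Qs, Qx. field. split; auto. }
  eapply Rle_trans; [apply Cmod_triangle|].
  rewrite Cmod_div by auto. rewrite Cmod_div by (apply Cmult_neq_0; auto; apply Cmult_neq_0; auto; intro K; injection K; lra).
  rewrite !Cmod_mult, Cmod_RtoC. fold r A. rewrite (Cmod_minus_sym (W x) (W s)).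
  rewrite Cmod2.
  assert (T1 : Cmod (Q s - Q x - RtoC (s - x) * Q') / Cmod (W s + W x) <= eps / 2 * r).
  { apply Rle_trans with ((eps * A / 2 * r) / A).
    unfold Rdiv. apply Rmult_le_compat; try (left; apply Rinv_0_lt_compat); try lra; auto.
    apply Cmod_ge_0. apply Rinv_le_contravar; lra.
    right. field. lra. }
  assert (T2 : r * Cmod Q' * Cmod (W s - W x) / (Cmod (W s + W x) * (2 * A)) <= eps / 2 * r).
  { apply Rle_trans with (r * L * eta / (A * (2 * A))).
    unfold Rdiv. apply Rmult_le_compat; try (left; apply Rinv_0_lt_compat; nra).
    repeat apply Rmult_le_pos; auto; apply Cmod_ge_0.
    apply Rmult_le_compat; auto. apply Rmult_le_pos; auto; apply Cmod_ge_0. apply Cmod_ge_0.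
    apply Rmult_le_compat_l; auto. unfold L; lra. lra.
    apply Rinv_le_contravar. nra. apply Rmult_le_compat_r; lra.
    apply Rle_trans with (r * L * (eps * A * A / L) / (A * (2 * A))).
    unfold Rdiv. apply Rmult_le_compat_r. left; apply Rinv_0_lt_compat; nra.
    apply Rmult_le_compat_l; [nra|]. unfold Rdiv in E2. exact E2.
    right. field. split; lra. }
  lra.
Qed.


Lemma cont01_interior f x : cont01 f -> 0 < x < 1 -> @continuous R_UniformSpace C_R_NormedModule f x.
Proof.
  intros Hf Hx. apply cont_of_eps. intros eps He.
  destruct (Hf x ltac:(lra) eps He) as [d [Hd H]].
  exists (Rmin d (Rmin x (1 - x))). split. { repeat apply Rmin_pos; lra. }
  intros s Hs. pose proof (Rmin_l d (Rmin x (1 - x))); pose proof (Rmin_r d (Rmin x (1 - x))).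
  pose proof (Rmin_l x (1 - x)); pose proof (Rmin_r x (1 - x)).
  apply H; [|lra]. unfold Rabs in Hs; destruct Rcase_abs in Hs; lra.
Qed.

Lemma RInt_FTC_ab (F D : R -> C) a b : 0 < a -> a <= b -> b < 1 -> cont01 D ->
  (forall x, 0 < x < 1 -> hd F x (D x)) ->
  @RInt C_R_CompleteNormedModule D a b = (F b - F a)%C.
Proof.
  intros Ha Hab Hb HD HF. apply is_RInt_unique.
  apply (@is_RInt_derive C_R_CompleteNormedModule F D a b).
  - intros x Hx. rewrite Rmin_left in Hx by lra. rewrite Rmax_right in Hx by lra.
    apply hd_is_derive. apply HF. lra.
  - intros x Hx. rewrite Rmin_left in Hx by lra. rewrite Rmax_right in Hx by lra.
    apply cont01_interior; auto. lra.
Qed.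

Lemma le_all_eps_0 X : (forall eps, 0 < eps -> X <= eps) -> X <= 0.
Proof. intros H. destruct (Rle_dec X 0); auto. specialize (H (X/2) ltac:(lra)). lra. Qed.

Lemma exact01 (F D : R -> C) : cont01 F -> cont01 D -> F 0 = F 1 ->
  (forall x, 0 < x < 1 -> hd F x (D x)) -> @RInt C_R_CompleteNormedModule D 0 1 = RtoC 0.
Proof.
  intros HF HD E01 Hd.
  destruct (cont01_bound D HD) as [BD [HBD HBD']].
  apply Cmod_eq_0. apply Rle_antisym; [|apply Cmod_ge_0].
  apply le_all_eps_0. intros eps He.
  destruct (HF 0 ltac:(lra) (eps/4) ltac:(lra)) as [d0 [Hd0 H0]].
  destruct (HF 1 ltac:(lra) (eps/4) ltac:(lra)) as [d1 [Hd1 H1]].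
  set (a := Rmin (Rmin (d0/2) (eps / (4 * BD))) (1/3)).
  set (c := Rmin (Rmin (d1/2) (eps / (4 * BD))) (1/3)).
  set (b := 1 - c).
  assert (Ha : 0 < a). { repeat apply Rmin_pos; try lra. apply Rdiv_lt_0_compat; lra. }
  assert (Hc : 0 < c). { repeat apply Rmin_pos; try lra. apply Rdiv_lt_0_compat; lra. }
  assert (Ha1 : a <= d0/2 /\ a <= eps / (4 * BD) /\ a <= 1/3).
  { unfold a. pose proof (Rmin_l (Rmin (d0/2) (eps / (4 * BD))) (1/3)).
    pose proof (Rmin_r (Rmin (d0/2) (eps / (4 * BD))) (1/3)).
    pose proof (Rmin_l (d0/2) (eps / (4 * BD))). pose proof (Rmin_r (d0/2) (eps / (4 * BD))). lra. }
  assert (Hc1 : c <= d1/2 /\ c <= eps / (4 * BD) /\ c <= 1/3).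
  { unfold c. pose proof (Rmin_l (Rmin (d1/2) (eps / (4 * BD))) (1/3)).
    pose proof (Rmin_r (Rmin (d1/2) (eps / (4 * BD))) (1/3)).
    pose proof (Rmin_l (d1/2) (eps / (4 * BD))). pose proof (Rmin_r (d1/2) (eps / (4 * BD))). lra. }
  assert (Ex1 := ex_RInt_ab D 0 a ltac:(lra) ltac:(lra) ltac:(unfold b; lra) HD).
  assert (Ex2 := ex_RInt_ab D a b ltac:(lra) ltac:(unfold b; lra) ltac:(unfold b; lra) HD).
  assert (Ex3 := ex_RInt_ab D b 1 ltac:(unfold b; lra) ltac:(unfold b; lra) ltac:(lra) HD).
  rewrite <- (@RInt_Chasles C_R_CompleteNormedModule D 0 a 1); auto.
  2:{ apply (@ex_RInt_Chasles C_R_NormedModule D a b 1); auto. }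
  rewrite <- (@RInt_Chasles C_R_CompleteNormedModule D a b 1); auto.
  rewrite (RInt_FTC_ab F D a b); auto; try (unfold b; lra).
  assert (B1 := RInt_Cbound D 0 a BD ltac:(lra) Ex1 ltac:(intros; apply HBD'; unfold b in *; lra)).
  assert (B3 := RInt_Cbound D b 1 BD ltac:(unfold b; lra) Ex3 ltac:(intros; apply HBD'; unfold b in *; lra)).
  assert (Fa : Cmod (F a - F 0) < eps / 4).
  { apply H0; [lra|]. rewrite Rminus_0_r, Rabs_pos_eq; lra. }
  assert (Fb : Cmod (F b - F 1) < eps / 4).
  { apply H1; [unfold b; lra|]. unfold b. replace (1 - c - 1) with (- c) by ring. rewrite Rabs_Ropp, Rabs_pos_eq; lra. }
  set (I1 := @RInt C_R_CompleteNormedModule D 0 a) in *.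
  set (I3 := @RInt C_R_CompleteNormedModule D b 1) in *.
  match goal with |- Cmod ?X <= _ => replace X with (I1 + I3 + (F b - F 1) - (F a - F 0))%C end.
  2:{ rewrite E01. change (I1 + I3 + (F b - F 1) - (F a - F 1) = I1 + ((F b - F a) + I3))%C. ring. }
  eapply Rle_trans; [apply Cmod_triangle|]. rewrite Cmod_opp.
  eapply Rle_trans; [apply Rplus_le_compat_r; apply Cmod_triangle|].
  eapply Rle_trans; [apply Rplus_le_compat_r; apply Rplus_le_compat_r; apply Cmod_triangle|].
  assert (BD * a <= eps / 4). { apply Rle_trans with (BD * (eps / (4 * BD))). apply Rmult_le_compat_l; lra. right; field; lra. }
  assert (BD * (1 - b) <= eps / 4). { unfold b. replace (1 - (1 - c)) with c by ring. apply Rle_trans with (BD * (eps / (4 * BD))). apply Rmult_le_compat_l; lra. right; field; lra. }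
  replace (a - 0) with a in B1 by ring. lra.
Qed.


Lemma fold_Rmax_le (L : list nat) (f : nat -> R) B : 0 <= B -> (forall x, In x L -> f x <= B) ->
  fold_right Rmax 0 (map f L) <= B.
Proof.
  intros HB H. induction L as [|a L IH]; simpl; auto.
  apply Rmax_lub. apply H; simpl; auto. apply IH. intros x Hx; apply H; simpl; auto.
Qed.

Lemma pdist_shift g p j h : pdist g p (shift p j h) <= Cmod h.
Proof.
  unfold pdist. apply fold_Rmax_le. apply Cmod_ge_0. intros k _. unfold shift.
  destruct (Nat.eqb k j). replace (p k - (p k + h))%C with (- h)%C by ring. rewrite Cmod_opp; lra.
  replace (p k - p k)%C with (RtoC 0) by ring. rewrite Cmod_0. apply Cmod_ge_0.
Qed.

Lemma pdist_refl g p : pdist g p p <= 0.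
Proof.
  unfold pdist. apply fold_Rmax_le. lra. intros k _.
  replace (p k - p k)%C with (RtoC 0) by ring. rewrite Cmod_0. lra.
Qed.

Lemma shift_other p j h k : k <> j -> shift p j h k = p k.
Proof. intros H. unfold shift. apply Nat.eqb_neq in H. rewrite H. auto. Qed.

Lemma shift_same p j h : shift p j h j = (p j + h)%C.
Proof. unfold shift. rewrite Nat.eqb_refl. auto. Qed.

Lemma prod_shift_notin (L : list nat) p j h z : ~ In j L ->
  fold_right Cmult 1%C (map (fun k => (z - shift p j h k)%C) L) =
  fold_right Cmult 1%C (map (fun k => (z - p k)%C) L).
Proof.
  induction L as [|a L IH]; simpl; intros Hn; auto.
  rewrite shift_other by (intro; apply Hn; auto). rewrite IH; auto.
Qed.

Lemma prod_shift_in (L : list nat) p j h z : NoDup L -> In j L ->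
  (fold_right Cmult 1%C (map (fun k => (z - shift p j h k)%C) L) * (z - p j) =
  fold_right Cmult 1%C (map (fun k => (z - p k)%C) L) * (z - p j - h))%C.
Proof.
  induction L as [|a L IH]; simpl; intros Hnd Hin; [contradiction|].
  inversion Hnd; subst. destruct Hin as [E|Hin].
  - subst a. rewrite shift_same. rewrite prod_shift_notin by auto. ring.
  - rewrite shift_other by (intro; subst; contradiction).
    rewrite <- Cmult_assoc, IH by auto. ring.
Qed.

Lemma hyp_shift g p j h z : (2 <= j <= 2 * g + 1)%nat ->
  (hyp_poly g (shift p j h) z * (z - p j) = hyp_poly g p z * (z - p j - h))%C.
Proof.
  intros Hj. unfold hyp_poly. rewrite <- !Cmult_assoc. f_equal.
  apply prod_shift_in. apply seq_NoDup. apply in_seq. lia.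
Qed.

Lemma prod_nz (L : list nat) (p : nat -> C) (z : C) : (forall k, In k L -> z <> p k) ->
  fold_right Cmult 1%C (map (fun k => (z - p k)%C) L) <> 0%C.
Proof.
  induction L as [|a L IH]; simpl; intros H.
  - intro K. injection K. lra.
  - apply Cmult_neq_0. intro K. apply (H a); auto. replace z with ((z - p a) + p a)%C by ring. rewrite K. ring.
    apply IH. intros; apply H; auto.
Qed.

Lemma hyp_nz g (p : nat -> C) (z : C) : z <> 0%C -> (forall k, (2 <= k <= 2 * g + 1)%nat -> z <> p k) -> hyp_poly g p z <> 0%C.
Proof.
  intros H0 H. unfold hyp_poly. apply Cmult_neq_0; auto. apply prod_nz.
  intros k Hk. unfold idx in Hk. apply in_seq in Hk. apply H. lia.
Qed.

Section Cycle.
Variable g : nat.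
Variable U : (nat -> C) -> Prop.
Variables (gam dgam : R -> C) (w : (nat -> C) -> R -> C).
Hypothesis Hc : lifted_cycle g U gam dgam w.

Lemma cyc_gam_hd x : hd gam x (dgam x).
Proof. destruct Hc as [H _]. apply is_derive_hd. apply H. Qed.

Lemma cyc_gam_cont : cont01 gam.
Proof.
  intros t Ht eps He. destruct (hd_lip gam t (dgam t) (cyc_gam_hd t)) as [d [Hd H]].
  set (L := Cmod (dgam t) + 1). fold L in H. assert (1 <= L) by (pose proof (Cmod_ge_0 (dgam t)); unfold L; lra).
  exists (Rmin d (eps / L)). split. apply Rmin_pos; auto. apply Rdiv_lt_0_compat; lra.
  intros s Hs Hst. pose proof (Rmin_l d (eps / L)); pose proof (Rmin_r d (eps / L)).
  eapply Rle_lt_trans. apply H. lra.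
  apply Rlt_le_trans with (L * (eps / L)). apply Rmult_lt_compat_l; lra. right; field; lra.
Qed.

Lemma cyc_dgam_cont : cont01 dgam.
Proof. destruct Hc as [_ [H _]]. exact H. Qed.

Lemma cyc_w_cont p : U p -> cont01 (w p).
Proof.
  intros Hp t Ht eps He. destruct Hc as [_ [_ [_ [_ [_ [_ H]]]]]].
  destruct (H p t Hp Ht eps He) as [d [Hd H1]]. exists d. split; auto.
  intros s Hs Hst. apply H1; auto. pose proof (pdist_refl g p). lra.
Qed.

Lemma cyc_avoid p t i : U p -> 0 <= t <= 1 -> (1 <= i <= 2 * g + 1)%nat -> gam t <> ub p i.
Proof. destruct Hc as [_ [_ [_ [H _]]]]. auto. Qed.

Lemma cyc_sq p t : U p -> 0 <= t <= 1 -> (w p t * w p t)%C = hyp_poly g p (gam t).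
Proof. destruct Hc as [_ [_ [_ [_ [H _]]]]]. auto. Qed.

Lemma cyc_closed p : U p -> w p 0 = w p 1.
Proof. destruct Hc as [_ [_ [_ [_ [_ [H _]]]]]]. auto. Qed.

Lemma cyc_gam_closed : gam 0 = gam 1.
Proof. destruct Hc as [_ [_ [H _]]]. auto. Qed.

Lemma cyc_hyp_nz p t : U p -> 0 <= t <= 1 -> hyp_poly g p (gam t) <> 0%C.
Proof.
  intros Hp Ht. apply hyp_nz.
  - pose proof (cyc_avoid p t 1 Hp Ht ltac:(lia)). unfold ub in H. simpl in H. auto.
  - intros k Hk. pose proof (cyc_avoid p t k Hp Ht ltac:(lia)). unfold ub in H.
    destruct (Nat.eqb_spec k 1); [lia|auto].
Qed.

Lemma cyc_w_nz p t : U p -> 0 <= t <= 1 -> w p t <> 0%C.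
Proof.
  intros Hp Ht Z. apply (cyc_hyp_nz p t Hp Ht). rewrite <- cyc_sq by auto. rewrite Z. ring.
Qed.

Lemma cyc_unif p : U p -> forall eta, 0 < eta -> exists delta, 0 < delta /\
  forall q, U q -> pdist g p q < delta -> forall t, 0 <= t <= 1 -> Cmod (w q t - w p t) < eta.
Proof.
  intros Hp eta He. destruct Hc as [_ [_ [_ [_ [_ [_ H]]]]]].
  assert (Hch : forall x : R, {d : posreal | forall q s, U q -> 0 <= s <= 1 -> pdist g p q < d ->
        Rabs (s - clamp x) < d -> Cmod (w q s - w p (clamp x)) < eta / 2}).
  { intros x. apply constructive_indefinite_description.
    destruct (H p (clamp x) Hp (clamp_in x) (eta/2) ltac:(lra)) as [d [Hd H1]].
    exists (mkposreal d Hd). simpl. auto. }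
  set (delta := fun x : Compactness.Tn 1 R => proj1_sig (Hch (fst x))).
  destruct (compactness_value 1 (0, tt) (1, tt) delta) as [dd Hdd].
  exists dd. split. apply cond_pos.
  intros q Hq Hpq t Ht. specialize (Hdd (t, tt)). simpl in Hdd.
  apply Classical_Prop.NNPP. intro Hn. apply Hdd. split; auto. intro Hex.
  destruct Hex as [[t' u] [[Ht' _] [[Htt' _] Hle]]].
  unfold delta in *. simpl in *. destruct (Hch t') as [d Hd]. simpl in *.
  rewrite clamp_id in Hd by auto.
  assert (A1 := Hd q t Hq Ht ltac:(lra) Htt').
  assert (A2 : Cmod (w p t - w p t') < eta / 2).
  { apply Hd; auto. pose proof (pdist_refl g p). pose proof (cond_pos d). lra. }
  apply Hn. pose proof (Cmod_tri3 (w q t) (w p t') (w p t)). rewrite (Cmod_minus_sym (w p t') (w p t)) in H0. lra.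
Qed.

End Cycle.


Definition hdc (f : C -> C) (x : C) (l : C) : Prop :=
  forall eps, 0 < eps -> exists d, 0 < d /\ forall y, Cmod (y - x) < d ->
    Cmod (f y - f x - (y - x) * l) <= eps * Cmod (y - x).

Lemma hdc_is_derive f x l : hdc f x l -> @is_derive C_AbsRing C_NormedModule f x l.
Proof.
  intros H. split. apply is_linear_scal_l.
  intros y Hy. apply (@is_filter_lim_locally_unique C_AbsRing (AbsRing_NormedModule C_AbsRing)) in Hy. subst y.
  intros [eps He]. destruct (H eps He) as [d [Hd H1]]. exists (mkposreal d Hd).
  intros y Hy. unfold ball in Hy. simpl in *. unfold AbsRing_ball in Hy. unfold norm; simpl.
  specialize (H1 y Hy). exact H1.
Qed.

Lemma hdc_plus f g x lf lg : hdc f x lf -> hdc g x lg -> hdc (fun t => f t + g t)%C x (lf + lg)%C.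
Proof.
  intros Hf Hg eps He.
  destruct (Hf (eps/2)) as [d1 [Hd1 H1]]; [lra|].
  destruct (Hg (eps/2)) as [d2 [Hd2 H2]]; [lra|].
  exists (Rmin d1 d2). split; [apply Rmin_pos; lra|]. intros s Hs.
  pose proof (Rmin_l d1 d2); pose proof (Rmin_r d1 d2).
  specialize (H1 s ltac:(lra)). specialize (H2 s ltac:(lra)).
  replace (f s + g s - (f x + g x) - (s - x) * (lf + lg))%C with
    ((f s - f x - (s - x) * lf) + (g s - g x - (s - x) * lg))%C by ring.
  eapply Rle_trans; [apply Cmod_triangle|]. lra.
Qed.

Lemma hdc_scal (c : C) f x l : hdc f x l -> hdc (fun t => c * f t)%C x (c * l)%C.
Proof.
  intros H eps He. destruct (H (eps / (Cmod c + 1))) as [d [Hd H1]].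
  { apply Rdiv_lt_0_compat; auto. pose proof (Cmod_ge_0 c); lra. }
  exists d. split; auto. intros y Hy. specialize (H1 y Hy).
  replace (c * f y - c * f x - (y - x) * (c * l))%C with (c * (f y - f x - (y - x) * l))%C by ring.
  rewrite Cmod_mult. pose proof (Cmod_ge_0 c). pose proof (Cmod_ge_0 (y - x)).
  apply Rle_trans with ((Cmod c + 1) * (eps / (Cmod c + 1) * Cmod (y - x))).
  apply Rmult_le_compat; auto; try lra. apply Cmod_ge_0.
  right. field. lra.
Qed.

Lemma hdc_const c x : hdc (fun _ => c) x 0%C.
Proof. intros eps He. exists 1. split; [lra|]. intros y _.
  replace (c - c - (y - x) * 0)%C with (RtoC 0) by ring. rewrite Cmod_0.
  pose proof (Cmod_ge_0 (y - x)). nra. Qed.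

Lemma hdc_ext f g x l : (forall y, f y = g y) -> hdc f x l -> hdc g x l.
Proof. intros E H eps He. destruct (H eps He) as [d [Hd H1]]. exists d. split; auto.
  intros y Hy. rewrite <- !E. auto. Qed.

Lemma ineq_e Y X Dd N Aa Bb S BA eta M0 m : 0 < m -> 0 <= Y -> 0 <= X <= BA -> 0 <= Dd <= eta ->
  0 <= N <= 3 * M0 + m -> m <= Aa -> m / 2 <= Bb -> m <= S ->
  Y * X * Dd * N / (2 * Aa * Bb * S) <= Y * (BA * (3 * M0 + m) / (m * m * m)) * eta.
Proof.
  intros Hm HY HX HD HN HA HB HS.
  apply Rle_trans with (Y * BA * eta * (3 * M0 + m) / (m * m * m)).
  - unfold Rdiv. apply Rmult_le_compat.
    + repeat apply Rmult_le_pos; lra.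
    + left. apply Rinv_0_lt_compat. repeat apply Rmult_lt_0_compat; lra.
    + apply Rmult_le_compat; try lra. repeat apply Rmult_le_pos; lra.
      apply Rmult_le_compat; try lra. apply Rmult_le_pos; lra.
      apply Rmult_le_compat_l; lra.
    + apply Rinv_le_contravar. repeat apply Rmult_lt_0_compat; lra.
      apply Rle_trans with (2 * m * (m / 2) * m). right; field.
      apply Rmult_le_compat; try lra. apply Rmult_le_pos; lra.
      apply Rmult_le_compat; lra.
  - right. field. lra.
Qed.

Section Deriv.
Variable g : nat.
Variable U : (nat -> C) -> Prop.
Hypothesis hU : par_open g U.
Variables (gam dgam : R -> C) (w : (nat -> C) -> R -> C).
Hypothesis Hc : lifted_cycle g U gam dgam w.

Lemma shift0 p j : shift p j 0%C = p.
Proof. apply functional_extensionality. intros k. unfold shift. destruct (Nat.eqb k j); auto. ring. Qed.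

Lemma cyc_deriv p j (Gf : R -> C) : U p -> (2 <= j <= 2 * g + 1)%nat -> cont01 Gf ->
  hdc (fun h => @RInt C_R_CompleteNormedModule (fun t => Gf t / w (shift p j h) t)%C 0 1) 0%C
      (@RInt C_R_CompleteNormedModule (fun t => Gf t / w p t * / (2 * (gam t - p j)))%C 0 1).
Proof.
  intros Hp Hj HG.
  destruct (hU p Hp) as [epsU [HepsU HU']].
  assert (HW := cyc_w_cont g U gam dgam w Hc p Hp).
  assert (HWnz := cyc_w_nz g U gam dgam w Hc p).
  destruct (cont01_lbound (w p) HW (fun t Ht => HWnz t Hp Ht)) as [m [Hm Hm']].
  destruct (cont01_bound (w p) HW) as [M0 [HM0 HM0']].
  assert (Hzu : forall t, 0 <= t <= 1 -> (gam t - p j)%C <> 0%C).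
  { intros t Ht Z. apply (cyc_avoid g U gam dgam w Hc p t j Hp Ht ltac:(lia)).
    unfold ub. destruct (Nat.eqb_spec j 1); [lia|]. replace (gam t) with ((gam t - p j) + p j)%C by ring.
    rewrite Z. ring. }
  assert (Hcz : cont01 (fun t => gam t - p j)%C).
  { apply cont01_minus. apply (cyc_gam_cont g U gam dgam w Hc). apply cont01_const. }
  destruct (cont01_bound _ (cont01_inv _ Hcz Hzu)) as [BA [HBA HBA']].
  destruct (cont01_bound Gf HG) as [BG [HBG HBG']].
  set (K0 := BA * (3 * M0 + m) / (m * m * m)).
  assert (HK0 : 0 < K0). { unfold K0. apply Rdiv_lt_0_compat. apply Rmult_lt_0_compat; lra.
    repeat apply Rmult_lt_0_compat; lra. }
  assert (Hint1 : forall q, U q -> cont01 (fun t => Gf t / w q t)%C).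
  { intros q Hq. apply cont01_mult; auto. apply cont01_inv. apply (cyc_w_cont g U gam dgam w Hc q Hq).
    intros; apply (cyc_w_nz g U gam dgam w Hc q); auto. }
  assert (Hint2 : cont01 (fun t => Gf t / w p t * / (2 * (gam t - p j)))%C).
  { apply cont01_mult; auto. apply cont01_inv. apply cont01_mult. apply cont01_const. auto.
    intros t Ht. apply Cmult_neq_0; auto. intro K; injection K; lra. }
  intros eps He.
  set (eta := Rmin (m / 2) (eps / (BG * K0))).
  assert (Heta : 0 < eta). { apply Rmin_pos. lra. apply Rdiv_lt_0_compat; auto. apply Rmult_lt_0_compat; lra. }
  pose proof (Rmin_l (m / 2) (eps / (BG * K0))) as E1. pose proof (Rmin_r (m / 2) (eps / (BG * K0))) as E2.
  fold eta in E1, E2.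
  destruct (cyc_unif g U gam dgam w Hc p Hp eta Heta) as [delta [Hdelta Hunif]].
  exists (Rmin epsU delta). split. apply Rmin_pos; lra.
  intros y Hy. pose proof (Rmin_l epsU delta); pose proof (Rmin_r epsU delta).
  replace (y - 0)%C with y in * by ring.
  rewrite shift0.
  set (q := shift p j y).
  assert (Hpq : pdist g p q <= Cmod y) by apply pdist_shift.
  assert (Hq : U q) by (apply HU'; lra).
  assert (Hu : forall t, 0 <= t <= 1 -> Cmod (w q t - w p t) < eta) by (intros; apply Hunif; auto; lra).
  rewrite <- RInt_Cmult by (apply ex_RInt01; auto).
  rewrite <- RInt_Cminus by (apply ex_RInt01; auto).
  rewrite <- RInt_Cminus.
  2:{ apply ex_RInt01. apply cont01_minus; auto. }
  2:{ apply ex_RInt_Cmult. apply ex_RInt01. auto. }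
  eapply Rle_trans. apply RInt_Cbound with (B := BG * (K0 * eta * Cmod y)). lra.
  { apply ex_RInt01. apply cont01_minus. apply cont01_minus; auto.
    apply cont01_mult; auto. apply cont01_const. }
  2:{ replace (BG * (K0 * eta * Cmod y) * (1 - 0)) with ((BG * K0 * eta) * Cmod y) by ring.
      apply Rmult_le_compat_r. apply Cmod_ge_0.
      apply Rle_trans with (BG * K0 * (eps / (BG * K0))). apply Rmult_le_compat_l. apply Rmult_le_pos; lra. lra.
      right. field. split; lra. }
  intros t Ht.
  set (a := w p t). set (b := w q t). set (z := gam t). set (u := p j).
  assert (Ha : a <> 0%C) by (apply HWnz; auto).
  assert (Hb : b <> 0%C) by (apply (cyc_w_nz g U gam dgam w Hc q); auto).
  assert (Hz : (z - u)%C <> 0%C) by (apply Hzu; auto).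
  assert (Hrel : (b * b * (z - u) = a * a * (z - u - y))%C).
  { unfold a, b, z, u. rewrite !(cyc_sq g U gam dgam w Hc) by auto. unfold q. apply hyp_shift. auto. }
  assert (Hy' : y = ((a * a - b * b) * (z - u) / (a * a))%C).
  { transitivity ((a * a * (z - u) - a * a * (z - u - y)) / (a * a))%C. field. auto.
    rewrite <- Hrel. field. auto. }
  assert (HA : m <= Cmod a) by (apply Hm'; auto).
  assert (HAM : Cmod a <= M0) by (apply HM0'; auto).
  assert (HD : Cmod (a - b) < eta) by (unfold a, b; rewrite Cmod_minus_sym; apply Hu; auto).
  assert (HB : m / 2 <= Cmod b).
  { pose proof (Cmod_rev a (a - b)). replace (a - (a - b))%C with b in H1 by ring. lra. }
  assert (HS : m <= Cmod (a + b)).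
  { pose proof (Cmod_rev (2 * a) (a - b)). replace (2 * a - (a - b))%C with (a + b)%C in H1 by ring.
    rewrite Cmod_mult, Cmod2 in H1. lra. }
  assert (Hab : (a + b)%C <> 0%C). { intro K. rewrite K, Cmod_0 in HS. lra. }
  assert (HN : Cmod (2 * a + b) <= 3 * M0 + m).
  { replace (2 * a + b)%C with (3 * a - (a - b))%C by ring. eapply Rle_trans. apply Cmod_triangle.
    rewrite Cmod_opp, Cmod_mult. replace (Cmod 3) with 3 by (rewrite Cmod_R, Rabs_pos_eq; lra). lra. }
  assert (HX : Cmod (/ (z - u)) <= BA) by (apply HBA'; auto).
  replace (Gf t / b - Gf t / a - y * (Gf t / a * / (2 * (z - u))))%C with
    (Gf t * (y * / (z - u) * (a - b) * (2 * a + b) / (2 * a * b * (a + b))))%C.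
  2:{ rewrite Hy'. field. repeat split; auto. }
  rewrite Cmod_mult. apply Rmult_le_compat. apply Cmod_ge_0. apply Cmod_ge_0. apply HBG'; auto.
  rewrite Cmod_div. 2:{ repeat apply Cmult_neq_0; auto. intro K; injection K; lra. }
  rewrite !Cmod_mult, Cmod2.
  replace (K0 * eta * Cmod y) with (Cmod y * K0 * eta) by ring. unfold K0.
  apply ineq_e; auto; try apply Cmod_ge_0; try lra; split; try apply Cmod_ge_0; lra.
Qed.

End Deriv.


Definition sumL (L : list nat) (f : nat -> C) : C := fold_right Cplus 0%C (map f L).

Lemma sumL_plus L (f h : nat -> C) : sumL L (fun k => f k + h k)%C = (sumL L f + sumL L h)%C.
Proof. induction L; unfold sumL in *; simpl; [ring|]. rewrite IHL. ring. Qed.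
Lemma sumL_scal L (a : C) (f : nat -> C) : sumL L (fun k => a * f k)%C = (a * sumL L f)%C.
Proof. induction L; simpl; unfold sumL in *; simpl; [ring|]. rewrite IHL. ring. Qed.
Lemma sumL_ext L (f h : nat -> C) : (forall k, In k L -> f k = h k) -> sumL L f = sumL L h.
Proof. induction L; simpl; intros E; auto. unfold sumL in *; simpl. rewrite E, IHL; auto. Qed.
Lemma sumL_zero L (f : nat -> C) : (forall k, In k L -> f k = 0%C) -> sumL L f = 0%C.
Proof. induction L as [|a L IH]; intros E; unfold sumL in *; simpl; auto.
  rewrite E by (simpl; auto). rewrite IH by (intros; apply E; simpl; auto). ring. Qed.
Lemma sumL_swap I K (f : nat -> nat -> C) :
  sumL I (fun i => sumL K (fun k => f i k)) = sumL K (fun k => sumL I (fun i => f i k)).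
Proof.
  induction I as [|a I IH]; simpl.
  - symmetry. apply sumL_zero. intros; reflexivity.
  - unfold sumL at 1; simpl. fold (sumL I (fun i => sumL K (fun k => f i k))). rewrite IH.
    rewrite <- sumL_plus. apply sumL_ext. intros k _. reflexivity.
Qed.

Lemma cont01_sumL L (f : nat -> R -> C) : (forall k, In k L -> cont01 (f k)) ->
  cont01 (fun t => sumL L (fun k => f k t)).
Proof.
  induction L as [|a L IH]; intros H; unfold sumL; simpl.
  - apply cont01_const.
  - apply cont01_plus. apply H; simpl; auto. apply IH. intros; apply H; simpl; auto.
Qed.

Lemma RInt_sumL L (f : nat -> R -> C) : (forall k, In k L -> cont01 (f k)) ->
  @RInt C_R_CompleteNormedModule (fun t => sumL L (fun k => f k t)) 0 1 =
  sumL L (fun k => @RInt C_R_CompleteNormedModule (f k) 0 1).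
Proof.
  induction L as [|a L IH]; intros H.
  - unfold sumL; simpl. rewrite RInt_const. unfold scal; simpl. unfold prod_scal; simpl.
    unfold RtoC. unfold scal; simpl. unfold mult; simpl. f_equal; apply Rmult_0_r.
  - unfold sumL; simpl. rewrite RInt_Cplus. fold (sumL L (fun k => @RInt C_R_CompleteNormedModule (f k) 0 1)).
    rewrite <- IH. reflexivity. intros; apply H; simpl; auto.
    apply ex_RInt01; apply H; simpl; auto.
    apply ex_RInt01. apply cont01_sumL. intros; apply H; simpl; auto.
Qed.

Lemma hd_eq f x l l' : hd f x l -> l = l' -> hd f x l'.
Proof. intros H E; subst; auto. Qed.

Section Exact.
Variable g : nat.
Variable U : (nat -> C) -> Prop.
Variables (gam dgam : R -> C) (w : (nat -> C) -> R -> C).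
Hypothesis Hc : lifted_cycle g U gam dgam w.
Variable p : nat -> C.
Hypothesis Hp : U p.

Definition Sinv (t : R) : C := sumL (idx g) (fun k => / (gam t - p k))%C.
Definition Pi (t : R) : C := fold_right Cmult 1%C (map (fun k => (gam t - p k)%C) (idx g)).

Lemma avoid_k t k : 0 <= t <= 1 -> (2 <= k <= 2 * g + 1)%nat -> (gam t - p k)%C <> 0%C.
Proof.
  intros Ht Hk Z. apply (cyc_avoid g U gam dgam w Hc p t k Hp Ht ltac:(lia)).
  unfold ub. destruct (Nat.eqb_spec k 1); [lia|]. replace (gam t) with ((gam t - p k) + p k)%C by ring.
  rewrite Z. ring.
Qed.

Lemma avoid_0 t : 0 <= t <= 1 -> gam t <> 0%C.
Proof. intros Ht. pose proof (cyc_avoid g U gam dgam w Hc p t 1 Hp Ht ltac:(lia)). unfold ub in H. simpl in H. auto. Qed.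

Lemma in_idx k : In k (idx g) -> (2 <= k <= 2 * g + 1)%nat.
Proof. unfold idx. intros H. apply in_seq in H. lia. Qed.

Lemma hd_prod (L : list nat) x : (forall k, In k L -> (gam x - p k)%C <> 0%C) ->
  hd (fun s => fold_right Cmult 1%C (map (fun k => (gam s - p k)%C) L)) x
     (fold_right Cmult 1%C (map (fun k => (gam x - p k)%C) L) * dgam x * sumL L (fun k => / (gam x - p k)))%C.
Proof.
  induction L as [|a L IH]; intros Hnz; simpl.
  - eapply hd_eq. apply hd_const. unfold sumL; simpl. ring.
  - assert (Ha : hd (fun s => gam s - p a)%C x (dgam x)).
    { eapply hd_eq. apply hd_plus. apply (cyc_gam_hd g U gam dgam w Hc). apply hd_const. ring. }
    eapply hd_eq. apply hd_mult. exact Ha. apply IH. intros; apply Hnz; simpl; auto.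
    unfold sumL; simpl. fold (sumL L (fun k => / (gam x - p k))%C). field. apply Hnz. simpl; auto.
Qed.

Definition Dx (t : R) : C := (dgam t / w p t * (1 - gam t * Sinv t) / 2)%C.
Definition Fx (t : R) : C := (gam t / w p t)%C.

Lemma hd_Fx x : 0 < x < 1 -> hd Fx x (Dx x).
Proof.
  intros Hx. assert (Hx' : 0 <= x <= 1) by lra.
  assert (HW := cyc_w_cont g U gam dgam w Hc p Hp).
  assert (Wnz : w p x <> 0%C) by (apply (cyc_w_nz g U gam dgam w Hc); auto).
  assert (HPi : hd Pi x (Pi x * dgam x * Sinv x)%C).
  { apply hd_prod. intros k Hk. apply avoid_k; auto. apply in_idx; auto. }
  assert (HQ : hd (fun s => gam s * Pi s)%C x (dgam x * Pi x + gam x * (Pi x * dgam x * Sinv x))%C).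
  { apply hd_mult. apply (cyc_gam_hd g U gam dgam w Hc). exact HPi. }
  set (Q' := (dgam x * Pi x + gam x * (Pi x * dgam x * Sinv x))%C) in *.
  assert (HWd : hd (w p) x (Q' / (2 * w p x))%C).
  { apply (hd_sqrt (w p) (fun s => gam s * Pi s)%C x Q' HQ Wnz).
    - exists (Rmin x (1 - x)). split. apply Rmin_pos; lra. intros s Hs.
      pose proof (Rmin_l x (1 - x)); pose proof (Rmin_r x (1 - x)).
      rewrite (cyc_sq g U gam dgam w Hc) by (auto; unfold Rabs in Hs; destruct Rcase_abs in Hs; lra).
      reflexivity.
    - intros eps He. destruct (HW x Hx' eps He) as [d [Hd H1]]. exists (Rmin d (Rmin x (1 - x))).
      split. repeat apply Rmin_pos; lra. intros s Hs.
      pose proof (Rmin_l d (Rmin x (1 - x))); pose proof (Rmin_r d (Rmin x (1 - x))).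
      pose proof (Rmin_l x (1 - x)); pose proof (Rmin_r x (1 - x)).
      apply H1; [|lra]. unfold Rabs in Hs; destruct Rcase_abs in Hs; lra. }
  assert (HFx := hd_mult gam (fun s => / w p s)%C x (dgam x) _ (cyc_gam_hd g U gam dgam w Hc x) (hd_inv (w p) x _ HWd Wnz)).
  unfold Fx. eapply hd_eq. exact HFx.
  assert (Hsq : (w p x * w p x)%C = (gam x * Pi x)%C) by (rewrite (cyc_sq g U gam dgam w Hc) by auto; reflexivity).
  assert (Hg0 : gam x <> 0%C) by (apply avoid_0; auto).
  assert (HPi0 : Pi x <> 0%C).
  { intro Z. assert (K : (w p x * w p x)%C = 0%C) by (rewrite Hsq, Z; ring).
    exact (Cmult_neq_0 _ _ Wnz Wnz K). }
  assert (EPi : Pi x = (w p x * w p x / gam x)%C) by (rewrite Hsq; field; auto).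
  unfold Dx, Q'. rewrite EPi. field. auto.
Qed.

Lemma cont01_Sinv : cont01 Sinv.
Proof.
  unfold Sinv. apply (cont01_sumL (idx g) (fun k t => / (gam t - p k))%C). intros k Hk.
  apply cont01_inv. apply cont01_minus. apply (cyc_gam_cont g U gam dgam w Hc). apply cont01_const.
  intros t Ht. apply avoid_k; auto. apply in_idx; auto.
Qed.

Lemma cont01_winv : cont01 (fun t => / w p t)%C.
Proof. apply cont01_inv. apply (cyc_w_cont g U gam dgam w Hc p Hp). intros; apply (cyc_w_nz g U gam dgam w Hc); auto. Qed.

Lemma RInt_Dx : @RInt C_R_CompleteNormedModule Dx 0 1 = RtoC 0.
Proof.
  apply (exact01 Fx Dx).
  - unfold Fx. apply cont01_mult. apply (cyc_gam_cont g U gam dgam w Hc). apply cont01_winv.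
  - unfold Dx. apply cont01_mult. apply cont01_mult. apply cont01_mult.
    apply (cyc_dgam_cont g U gam dgam w Hc). apply cont01_winv.
    apply cont01_minus. apply cont01_const. apply cont01_mult. apply (cyc_gam_cont g U gam dgam w Hc).
    apply cont01_Sinv. apply cont01_const.
  - unfold Fx. rewrite (cyc_gam_closed g U gam dgam w Hc), (cyc_closed g U gam dgam w Hc p Hp). auto.
  - apply hd_Fx.
Qed.

Definition Phi0 (t : R) : C := (1 * dgam t / w p t)%C.
Definition PhiI (i : nat) (t : R) : C := (/ (gam t - p i) * dgam t / w p t)%C.

Lemma cont01_Phi0 : cont01 Phi0.
Proof. unfold Phi0. apply cont01_mult. apply cont01_mult. apply cont01_const. apply (cyc_dgam_cont g U gam dgam w Hc). apply cont01_winv. Qed.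

Lemma cont01_PhiI i : (2 <= i <= 2 * g + 1)%nat -> cont01 (PhiI i).
Proof. intros Hi. unfold PhiI. apply cont01_mult. apply cont01_mult. apply cont01_inv.
  apply cont01_minus. apply (cyc_gam_cont g U gam dgam w Hc). apply cont01_const.
  intros; apply avoid_k; auto. apply (cyc_dgam_cont g U gam dgam w Hc). apply cont01_winv. Qed.

Lemma cyc_sum_zero :
  (- @RInt C_R_CompleteNormedModule Phi0 0 1 +
   sumL (idx g) (fun i => @RInt C_R_CompleteNormedModule Phi0 0 1 + p i * @RInt C_R_CompleteNormedModule (PhiI i) 0 1))%C = 0%C.
Proof.
  assert (Hc0 := cont01_Phi0).
  assert (HcI : forall i, In i (idx g) -> cont01 (fun t => Phi0 t + p i * PhiI i t)%C).
  { intros i Hi. apply cont01_plus; auto. apply cont01_mult. apply cont01_const. apply cont01_PhiI. apply in_idx; auto. }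
  rewrite (sumL_ext _ _ (fun i => @RInt C_R_CompleteNormedModule (fun t => Phi0 t + p i * PhiI i t)%C 0 1)).
  2:{ intros i Hi. assert (Hci := cont01_PhiI i (in_idx i Hi)).
      rewrite RInt_Cplus; [rewrite RInt_Cmult; [reflexivity|apply ex_RInt01; auto]|apply ex_RInt01; auto|
        apply ex_RInt01; apply cont01_mult; [apply cont01_const|auto]]. }
  rewrite <- (RInt_sumL (idx g) (fun i t => Phi0 t + p i * PhiI i t)%C) by auto.
  replace (- @RInt C_R_CompleteNormedModule Phi0 0 1)%C with ((-1) * @RInt C_R_CompleteNormedModule Phi0 0 1)%C by ring.
  rewrite <- RInt_Cmult by (apply ex_RInt01; auto).
  rewrite <- RInt_Cplus.
  2:{ apply ex_RInt_Cmult. apply ex_RInt01; auto. }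
  2:{ apply ex_RInt01. apply (cont01_sumL (idx g) (fun i t => Phi0 t + p i * PhiI i t)%C). auto. }
  rewrite (RInt_ext01 _ (fun t => (-2) * Dx t)%C). 
  2: lra.
  2:{ intros t Ht.
      rewrite (sumL_ext _ _ (fun i => dgam t / w p t * gam t * / (gam t - p i))%C).
      2:{ intros i Hi. unfold Phi0, PhiI.
          assert (Wt : w p t <> 0%C) by (apply (cyc_w_nz g U gam dgam w Hc); auto).
          assert (Gt : (gam t - p i)%C <> 0%C) by (apply avoid_k; auto; apply in_idx; auto).
          field. repeat split; auto. }
      rewrite sumL_scal. unfold Dx, Sinv, Phi0. field. apply (cyc_w_nz g U gam dgam w Hc); auto. }
  rewrite RInt_Cmult. rewrite RInt_Dx. ring.
  apply ex_RInt01. unfold Dx. apply cont01_mult. apply cont01_mult. apply cont01_mult.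
    apply (cyc_dgam_cont g U gam dgam w Hc). apply cont01_winv.
    apply cont01_minus. apply cont01_const. apply cont01_mult. apply (cyc_gam_cont g U gam dgam w Hc).
    apply cont01_Sinv. apply cont01_const.
Qed.

End Exact.


Lemma q1 : RtoC (1/4) = (/ RtoC 4)%C.
Proof. unfold Cinv, RtoC; simpl. f_equal; field. Qed.
Lemma q2 : RtoC (-1/4) = (- / RtoC 4)%C.
Proof. unfold Cinv, Copp, RtoC; simpl. f_equal; field. Qed.

Lemma hdc_eq f x l l' : hdc f x l -> l = l' -> hdc f x l'.
Proof. intros H E; subst; auto. Qed.

Section Main.
Variable g : nat.
Variable U : (nat -> C) -> Prop.
Hypothesis hU : par_open g U.
Variables (gam dgam : nat -> R -> C) (w : nat -> (nat -> C) -> R -> C).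
Hypothesis hcyc : forall k, (k < 2 * g)%nat -> lifted_cycle g U (gam k) (dgam k) (w k).
Variable c : nat -> C.
Variable p : nat -> C.
Hypothesis hp : U p.

Definition Kl := seq 0 (2 * g).

Lemma inK k : In k Kl -> (k < 2 * g)%nat.
Proof. unfold Kl. intros H. apply in_seq in H. lia. Qed.

Lemma per_eq F q : per g c gam dgam w F q = sumL Kl (fun k => c k * cyc_int (gam k) (dgam k) (w k) F q)%C.
Proof. reflexivity. Qed.

Definition Lval (F : C -> C) (j : nat) : C :=
  sumL Kl (fun k => c k * @RInt C_R_CompleteNormedModule
     (fun t => F (gam k t) * dgam k t / w k p t * / (2 * (gam k t - p j))) 0 1)%C.

Lemma per_deriv_L F j (L : list nat) : (forall k, (k < 2 * g)%nat -> cont01 (fun t => F (gam k t))) ->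
  (2 <= j <= 2 * g + 1)%nat -> (forall k, In k L -> (k < 2 * g)%nat) ->
  hdc (fun h => sumL L (fun k => c k * cyc_int (gam k) (dgam k) (w k) F (shift p j h))%C) 0%C
    (sumL L (fun k => c k * @RInt C_R_CompleteNormedModule
     (fun t => F (gam k t) * dgam k t / w k p t * / (2 * (gam k t - p j))) 0 1)%C).
Proof.
  intros HF Hj HL. unfold sumL.
  induction L as [|a L IH]; simpl.
  - apply hdc_const.
  - apply hdc_plus.
    + apply hdc_scal. unfold cyc_int.
      apply (cyc_deriv g U hU (gam a) (dgam a) (w a) (hcyc a (HL a (or_introl eq_refl))) p j
              (fun t => F (gam a t) * dgam a t)%C hp Hj).
      apply cont01_mult. apply HF. apply HL; simpl; auto.
      apply (cyc_dgam_cont g U (gam a) (dgam a) (w a) (hcyc a (HL a (or_introl eq_refl)))).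
    + apply IH. intros; apply HL; simpl; auto.
Qed.

Lemma per_deriv F j : (forall k, (k < 2 * g)%nat -> cont01 (fun t => F (gam k t))) ->
  (2 <= j <= 2 * g + 1)%nat ->
  hdc (fun h => per g c gam dgam w F (shift p j h)) 0%C (Lval F j).
Proof. intros HF Hj. apply (per_deriv_L F j Kl HF Hj inK). Qed.

Lemma cont_F1 k : (k < 2 * g)%nat -> cont01 (fun t => (fun _ : C => RtoC 1) (gam k t)).
Proof. intros. apply cont01_const. Qed.

Lemma cont_Fi k i : (k < 2 * g)%nat -> (2 <= i <= 2 * g + 1)%nat ->
  cont01 (fun t => (fun z => / (z - p i))%C (gam k t)).
Proof.
  intros Hk Hi. apply cont01_inv. apply cont01_minus.
  apply (cyc_gam_cont g U _ _ _ (hcyc k Hk)). apply cont01_const.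
  intros t Ht. apply (avoid_k g U _ _ _ (hcyc k Hk) p hp t i Ht Hi).
Qed.

Lemma R1 j : (2 <= j <= 2 * g + 1)%nat ->
  Lval (fun _ => 1%C) j = (/ 2 * per g c gam dgam w (fun z => / (z - p j))%C p)%C.
Proof.
  intros Hj. unfold Lval. rewrite per_eq, <- sumL_scal. apply sumL_ext. intros k Hk.
  assert (Hk' := inK k Hk). assert (Hc := hcyc k Hk').
  unfold cyc_int. rewrite (RInt_ext01 _ (fun t => / 2 * (/ (gam k t - p j) * dgam k t / w k p t))%C) by
    (try lra; intros t Ht;
     assert (Wt : w k p t <> 0%C) by (apply (cyc_w_nz g U _ _ _ Hc); auto);
     assert (Gt : (gam k t - p j)%C <> 0%C) by (apply (avoid_k g U _ _ _ Hc p hp); auto);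
     field; repeat split; auto; intro K; injection K; lra).
  rewrite RInt_Cmult. ring. apply ex_RInt01. apply (cont01_PhiI g U _ _ _ Hc p hp j Hj).
Qed.

Lemma R2 i j : (2 <= i <= 2 * g + 1)%nat -> (2 <= j <= 2 * g + 1)%nat -> p i <> p j ->
  Lval (fun z => / (z - p i))%C j = (/ (2 * (p i - p j)) *
    (per g c gam dgam w (fun z => / (z - p i))%C p - per g c gam dgam w (fun z => / (z - p j))%C p))%C.
Proof.
  intros Hi Hj Hij. unfold Lval. rewrite !per_eq.
  replace (sumL Kl (fun k => c k * cyc_int (gam k) (dgam k) (w k) (fun z => / (z - p i)) p)%C
           - sumL Kl (fun k => c k * cyc_int (gam k) (dgam k) (w k) (fun z => / (z - p j)) p)%C)%C with
     (sumL Kl (fun k => c k * cyc_int (gam k) (dgam k) (w k) (fun z => / (z - p i)) p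
            + (-1) * (c k * cyc_int (gam k) (dgam k) (w k) (fun z => / (z - p j)) p))%C)
    by (rewrite sumL_plus, sumL_scal; ring).
  rewrite <- sumL_scal. apply sumL_ext. intros k Hk.
  assert (Hk' := inK k Hk). assert (Hc := hcyc k Hk').
  unfold cyc_int. rewrite (RInt_ext01 _ (fun t => / (2 * (p i - p j)) *
      (/ (gam k t - p i) * dgam k t / w k p t - / (gam k t - p j) * dgam k t / w k p t))%C) by
    (try lra; intros t Ht;
     assert (Wt : w k p t <> 0%C) by (apply (cyc_w_nz g U _ _ _ Hc); auto);
     assert (Gt : (gam k t - p j)%C <> 0%C) by (apply (avoid_k g U _ _ _ Hc p hp); auto);
     assert (Gti : (gam k t - p i)%C <> 0%C) by (apply (avoid_k g U _ _ _ Hc p hp); auto);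
     assert (Dij : (p i - p j)%C <> 0%C) by (intro K; apply Hij; replace (p i) with ((p i - p j) + p j)%C by ring; rewrite K; ring);
     field; repeat split; auto; intro K; injection K; lra).
  assert (E1 := ex_RInt01 _ (cont01_PhiI g U _ _ _ Hc p hp i Hi)).
  assert (E2 := ex_RInt01 _ (cont01_PhiI g U _ _ _ Hc p hp j Hj)).
  rewrite RInt_Cmult. rewrite RInt_Cminus by auto. unfold PhiI. ring.
  apply ex_RInt01. apply cont01_minus; apply (cont01_PhiI g U _ _ _ Hc p hp); auto.
Qed.


Lemma acoef_1 q : acoef g c gam dgam w 1 q = (- per g c gam dgam w (fun _ => RtoC 1) q)%C.
Proof. reflexivity. Qed.

Lemma acoef_i i q : i <> 1%nat -> acoef g c gam dgam w i q =
  (per g c gam dgam w (fun _ => RtoC 1) q + q i * per g c gam dgam w (fun z => / (z - q i)) q)%C.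
Proof. intros H. unfold acoef. apply Nat.eqb_neq in H. rewrite H. reflexivity. Qed.

Lemma sum_zero : fold_right Cplus 0%C (map (fun i => acoef g c gam dgam w i p) (seq 1 (2 * g + 1))) = 0%C.
Proof.
  replace (2 * g + 1)%nat with (S (2 * g)) by lia.
  change (seq 1 (S (2 * g))) with (1%nat :: seq 2 (2 * g)).
  change (acoef g c gam dgam w 1 p + sumL (idx g) (fun i => acoef g c gam dgam w i p) = 0)%C.
  rewrite acoef_1.
  rewrite (sumL_ext _ _ (fun i => per g c gam dgam w (fun _ => RtoC 1) p + p i * per g c gam dgam w (fun z => / (z - p i)) p)%C).
  2:{ intros i Hi. apply acoef_i. apply in_idx in Hi. lia. }
  rewrite !per_eq.
  set (X := fun k => cyc_int (gam k) (dgam k) (w k) (fun _ => RtoC 1) p).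
  set (Y := fun i k => cyc_int (gam k) (dgam k) (w k) (fun z => / (z - p i))%C p).
  change (- sumL Kl (fun k => c k * X k) + sumL (idx g) (fun i => sumL Kl (fun k => c k * X k) +
            p i * sumL Kl (fun k => c k * Y i k)) = 0)%C.
  assert (Z : forall k, In k Kl -> (- X k + sumL (idx g) (fun i => X k + p i * Y i k) = 0)%C).
  { intros k Hk. exact (cyc_sum_zero g U (gam k) (dgam k) (w k) (hcyc k (inK k Hk)) p hp). }
  transitivity (sumL Kl (fun k => c k * (- X k + sumL (idx g) (fun i => X k + p i * Y i k))))%C.
  2:{ apply sumL_zero. intros k Hk. rewrite Z by auto. ring. }
  rewrite (sumL_ext Kl (fun k => c k * (- X k + sumL (idx g) (fun i => X k + p i * Y i k)))%C (fun k => (-1) * (c k * X k) + sumL (idx g) (fun i => c k * X k + p i * (c k * Y i k)))%C).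
  2:{ intros k Hk. replace (c k * (- X k + sumL (idx g) (fun i => X k + p i * Y i k)))%C with
        ((-1) * (c k * X k) + c k * sumL (idx g) (fun i => X k + p i * Y i k))%C by ring.
      rewrite <- sumL_scal. f_equal. apply sumL_ext. intros; ring. }
  rewrite (sumL_plus Kl (fun k => (-1) * (c k * X k))%C).
  rewrite (sumL_scal Kl (-1) (fun k => c k * X k)%C).
  rewrite <- (sumL_swap (idx g) Kl (fun i k => c k * X k + p i * (c k * Y i k))%C).
  rewrite (sumL_ext (idx g) (fun i => sumL Kl (fun k => c k * X k + p i * (c k * Y i k)))%C
      (fun i => sumL Kl (fun k => c k * X k) + p i * sumL Kl (fun k => c k * Y i k))%C).
  2:{ intros i _. rewrite sumL_plus, sumL_scal. reflexivity. }
  ring.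
Qed.

End Main.


Theorem theorem2 (g : nat) (hg : (1 <= g)%nat)
  (U : (nat -> C) -> Prop) (hU : par_open g U) (hadm : forall p, U p -> admissible g p)
  (gam dgam : nat -> R -> C) (w : nat -> (nat -> C) -> R -> C)
  (hcyc : forall k, (k < 2 * g)%nat -> lifted_cycle g U (gam k) (dgam k) (w k))
  (c : nat -> C) (p : nat -> C) (hp : U p) :
  (forall i j, (1 <= i <= 2 * g + 1)%nat -> (2 <= j <= 2 * g + 1)%nat -> i <> j ->
     @is_derive C_AbsRing C_NormedModule
       (fun h => acoef g c gam dgam w i (shift p j h)) (RtoC 0)
       (2 * (alpha j * acoef g c gam dgam w i p - alpha i * acoef g c gam dgam w j p)
          / (p j - ub p i))%C) /\
  fold_right Cplus 0%C (map (fun i => acoef g c gam dgam w i p) (seq 1 (2 * g + 1))) = 0%C.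
Proof.
  split.
  2:{ apply (sum_zero g U gam dgam w hcyc c p hp). }
  intros i j Hi Hj Hij. apply hdc_is_derive.
  destruct (hadm p hp) as [Hnz Hdist].
  assert (Hj1 : j <> 1%nat) by lia.
  assert (Hpj : p j <> 0%C) by (apply Hnz; lia).
  assert (Aj : alpha j = RtoC (-1/4)) by (unfold alpha; apply Nat.eqb_neq in Hj1; rewrite Hj1; auto).
  destruct (Nat.eq_dec i 1) as [->|Hi1].
  - apply (hdc_ext (fun h => (-1) * per g c gam dgam w (fun _ => RtoC 1) (shift p j h))%C).
    { intros y. rewrite acoef_1. ring. }
    eapply hdc_eq. apply hdc_scal. apply (per_deriv g U hU gam dgam w hcyc c p hp); auto.
    { intros k Hk. apply (cont_F1 g gam k Hk). }
    rewrite (R1 g U gam dgam w hcyc c p hp j Hj).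
    rewrite Aj. rewrite (acoef_i g gam dgam w c j p Hj1), acoef_1.
    unfold alpha, ub. simpl. rewrite q1, q2. field. repeat split; try exact Hpj; try (intro K; injection K; lra).
  - assert (Ai : alpha i = RtoC (-1/4)) by (unfold alpha; apply Nat.eqb_neq in Hi1; rewrite Hi1; auto).
    assert (Hi2 : (2 <= i <= 2 * g + 1)%nat) by lia.
    assert (Hpij : p i <> p j) by (apply Hdist; auto).
    assert (Dij : (p i - p j)%C <> 0%C)
      by (intro K; apply Hpij; replace (p i) with ((p i - p j) + p j)%C by ring; rewrite K; ring).
    apply (hdc_ext (fun h => per g c gam dgam w (fun _ => RtoC 1) (shift p j h) +
                             p i * per g c gam dgam w (fun z => / (z - p i)) (shift p j h))%C).
    { intros y. rewrite (acoef_i g gam dgam w c i _ Hi1). rewrite shift_other by auto. reflexivity. }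
    eapply hdc_eq. apply hdc_plus.
    apply (per_deriv g U hU gam dgam w hcyc c p hp); auto.
    { intros k Hk. apply (cont_F1 g gam k Hk). }
    apply hdc_scal. apply (per_deriv g U hU gam dgam w hcyc c p hp); auto.
    { intros k Hk. apply (cont_Fi g U gam dgam w hcyc p hp k i Hk Hi2). }
    rewrite (R1 g U gam dgam w hcyc c p hp j Hj).
    rewrite (R2 g U gam dgam w hcyc c p hp i j Hi2 Hj Hpij).
    rewrite Aj, Ai. rewrite (acoef_i g gam dgam w c j p Hj1), (acoef_i g gam dgam w c i p Hi1).
    unfold ub. apply Nat.eqb_neq in Hi1. rewrite Hi1. rewrite q2.
    assert (Dji : (p j - p i)%C <> 0%C)
      by (intro K; apply Hpij; replace (p j) with ((p j - p i) + p i)%C by ring; rewrite K; ring).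
    field. repeat split; auto; try (intro K; injection K; lra).
Qed.
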